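(* Let $F_1=1+5x-8x^2+x^3$, $G_0=1-x+x^2$, $G_1=1-235x+1430x^2-1695x^3+270x^4+229x^5+x^6$, and $\Phi_3(x)=\dfrac{1728\,x(x-1)F_1^7}{G_0^3G_1^3}$. Then in a neighborhood of $x=0$ (with all radical factors taking the value $1$ at $x=0$): $${}_3F_2\!\left(-\tfrac1{42},\tfrac{13}{42},\tfrac{9}{14};\tfrac47,\tfrac67;\Phi_3\right)=(1-x)^{1/7}G_0^{-1/14}G_1^{-1/14},$$ $${}_3F_2\!\left(\tfrac5{42},\tfrac{19}{42},\tfrac{11}{14};\tfrac57,\tfrac87;\Phi_3\right)=(1-x)^{2/7}F_1^{-1}G_0^{5/14}G_1^{5/14},$$ $${}_3F_2\!\left(\tfrac{17}{42},\tfrac{31}{42},\tfrac{15}{14};\tfrac97,\tfrac{10}7;\Phi_3\right)=(1-x)^{-3/7}F_1^{-3}G_0^{17/14}G_1^{17/14}.$$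
   Context: ${}_3F_2(\alpha_1,\alpha_2,\alpha_3;\beta_1,\beta_2;z)=\sum_{n\ge0}\frac{(\alpha_1)_n(\alpha_2)_n(\alpha_3)_n}{(\beta_1)_n(\beta_2)_n n!}z^n$. Note $\Phi_3(0)=0$. *)

(* Defs.v *)
From Stdlib Require Import Reals Factorial.
Open Scope R_scope.

Fixpoint poch (a : R) (n : nat) : R :=
  match n with
  | O => 1
  | S m => poch a m * (a + INR m)
  end.

Definition hyp32_coef (a1 a2 a3 b1 b2 : R) (n : nat) : R :=
  poch a1 n * poch a2 n * poch a3 n / (poch b1 n * poch b2 n * INR (fact n)).

Definition hyp32_sum (a1 a2 a3 b1 b2 z l : R) : Prop :=
  infinite_sum (fun n => hyp32_coef a1 a2 a3 b1 b2 n * z ^ n) l.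

Definition F1 (x : R) : R := 1 + 5*x - 8*x^2 + x^3.
Definition G0 (x : R) : R := 1 - x + x^2.
Definition G1 (x : R) : R :=
  1 - 235*x + 1430*x^2 - 1695*x^3 + 270*x^4 + 229*x^5 + x^6.
Definition Phi3 (x : R) : R :=
  1728 * x * (x - 1) * F1 x ^ 7 / (G0 x ^ 3 * G1 x ^ 3).

(* Main.v *)
Require Import Defs.
From Stdlib Require Import Reals.
Open Scope R_scope.
From Stdlib Require Import Lra Lia ZArith List.
Import ListNotations.
From Coquelicot Require Import Coquelicot.
Open Scope R_scope.

Fixpoint pev (l : list Z) (x : R) : R :=
  match l with nil => 0 | a :: l' => IZR a + x * pev l' x end.
Fixpoint padd (p q : list Z) : list Z :=
  match p, q with
  | nil, _ => q | _, nil => p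
  | a :: p', b :: q' => (a + b)%Z :: padd p' q' end.
Definition pscal (c : Z) (p : list Z) : list Z := map (fun a => (c * a)%Z) p.
Fixpoint pmul (p q : list Z) : list Z :=
  match p with nil => nil | a :: p' => padd (pscal a q) (0%Z :: pmul p' q) end.
Fixpoint pder (p : list Z) : list Z :=
  match p with nil => nil | a :: p' => padd p' (0%Z :: pder p') end.
Fixpoint allzero (p : list Z) : bool :=
  match p with nil => true | a :: p' => (Z.eqb a 0 && allzero p')%bool end.

Lemma pev_add p q x : pev (padd p q) x = pev p x + pev q x.
Proof.
  revert q; induction p as [|a p IH]; intros [|b q]; simpl; try ring.
  rewrite IH, plus_IZR; ring.
Qed.
Lemma pev_scal c p x : pev (pscal c p) x = IZR c * pev p x.
Proof.
  induction p as [|a p IH]; simpl; [ring|]. rewrite IH, mult_IZR; ring.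
Qed.
Lemma pev_mul p q x : pev (pmul p q) x = pev p x * pev q x.
Proof.
  induction p as [|a p IH]; simpl; [ring|].
  rewrite pev_add, pev_scal. simpl. rewrite IH. ring.
Qed.
Lemma allzero_pev p x : allzero p = true -> pev p x = 0.
Proof.
  induction p as [|a p IH]; simpl; [auto|].
  intros H; apply andb_prop in H as [H1 H2]. apply Z.eqb_eq in H1; subst.
  rewrite IH by auto. ring.
Qed.
Lemma pder_correct p x : is_derive (pev p) x (pev (pder p) x).
Proof.
  apply is_derive_Reals.
  induction p as [|a p IH]; simpl.
  - apply derivable_pt_lim_const.
  - rewrite pev_add. simpl.
    replace (pev p x + (0 + x * pev (pder p) x)) with (0 + (1 * pev p x + x * pev (pder p) x)) by ring.
    apply (derivable_pt_lim_plus (fun _ => IZR a) (fun y => y * pev p y)).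
    + apply derivable_pt_lim_const.
    + apply (derivable_pt_lim_mult (fun y => y) (pev p)); [apply derivable_pt_lim_id| exact IH].
Qed.
Definition psub p q := padd p (pscal (-1) q).

Lemma isd_plus (f g : R -> R) (x a b : R) : is_derive f x a -> is_derive g x b -> is_derive (fun y => f y + g y) x (a + b).
Proof. rewrite !is_derive_Reals; intros; apply (derivable_pt_lim_plus f g); auto. Qed.
Lemma isd_minus (f g : R -> R) (x a b : R) : is_derive f x a -> is_derive g x b -> is_derive (fun y => f y - g y) x (a - b).
Proof. rewrite !is_derive_Reals; intros; apply (derivable_pt_lim_minus f g); auto. Qed.
Lemma isd_mult (f g : R -> R) (x a b : R) : is_derive f x a -> is_derive g x b -> is_derive (fun y => f y * g y) x (a * g x + f x * b).
Proof. rewrite !is_derive_Reals; intros; apply (derivable_pt_lim_mult f g); auto. Qed.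
Lemma isd_div (f g : R -> R) (x a b : R) : is_derive f x a -> is_derive g x b -> g x <> 0 ->
  is_derive (fun y => f y / g y) x ((a * g x - f x * b) / (g x) ^ 2).
Proof.
  rewrite !is_derive_Reals; intros.
  replace ((a * g x - f x * b) / g x ^ 2) with ((a * g x - b * f x) / Rsqr (g x)) by (unfold Rsqr; field; auto).
  apply (derivable_pt_lim_div f g); auto.
Qed.
Lemma isd_comp (f g : R -> R) (x a b : R) : is_derive g x b -> is_derive f (g x) a -> is_derive (fun y => f (g y)) x (a * b).
Proof.
  rewrite !is_derive_Reals; intros. replace (a * b) with (a * b) by ring.
  apply (derivable_pt_lim_comp g f); auto.
Qed.
Lemma isd_ext (f g : R -> R) (x a : R) : (forall y, f y = g y) -> is_derive f x a -> is_derive g x a.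
Proof. intros H; apply is_derive_ext; auto. Qed.
Lemma isd_eq (f : R -> R) (x a b : R) : a = b -> is_derive f x a -> is_derive f x b.
Proof. intros ->; auto. Qed.

Lemma isd_id (x : R) : is_derive (fun s : R => s) x 1.
Proof. apply is_derive_Reals, derivable_pt_lim_id. Qed.
Lemma isd_const (c x : R) : is_derive (fun _ : R => c) x 0.
Proof. apply is_derive_Reals, derivable_pt_lim_const. Qed.
Lemma isd_cont (f : R -> R) (x a : R) : is_derive f x a -> continuity_pt f x.
Proof.
  intros H. apply continuity_pt_filterlim. apply (ex_derive_continuous f). exists a; auto.
Qed.

Lemma gron_pos (E dE : R -> R) d B : 0 < d ->
  (forall x, 0 < x < d -> is_derive E x (dE x) /\ 0 <= E x /\ E x <= B /\ x * dE x <= - E x) ->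
  forall x, 0 < x < d -> E x = 0.
Proof.
  intros Hd H x Hx.
  assert (Key : forall t, 0 < t < x -> x * E x <= t * B).
  { intros t Ht.
    destruct (MVT_gen (fun s => s * E s) t x (fun s => 1 * E s + s * dE s)) as [c [Hc Eq]].
    - intros y Hy. rewrite Rmin_left, Rmax_right in Hy by lra.
      apply (isd_mult (fun s => s) E y 1 (dE y)); [apply isd_id|].
      apply (H y); lra.
    - intros y Hy. rewrite Rmin_left, Rmax_right in Hy by lra.
      apply isd_cont with (1 * E y + y * dE y).
      apply (isd_mult (fun s => s) E y 1 (dE y)); [apply isd_id|].
      apply (H y); lra.
    - rewrite Rmin_left, Rmax_right in Hc by lra.
      destruct (H c) as [_ [Hc1 [_ Hc3]]]; [lra|].
      destruct (H t) as [_ [Ht1 [Ht2 _]]]; [lra|].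
      assert (x * E x - t * E t <= 0).
      { rewrite Eq. apply Rmult_le_0_r; lra. }
      nra. }
  destruct (H x Hx) as [_ [HE0 [HEB _]]].
  assert (HB : 0 <= B) by lra.
  destruct (Rle_lt_dec (x * E x) 0) as [Hn|Hp].
  - assert (E x <= 0).
    { apply Rmult_le_reg_l with x; lra. }
    lra.
  - exfalso.
    set (t := Rmin (x / 2) (x * E x / (2 * (B + 1)))).
    assert (Ht0 : 0 < t).
    { unfold t; apply Rmin_glb_lt; [lra|]. apply Rdiv_lt_0_compat; lra. }
    assert (Ht1 : t <= x * E x / (2 * (B + 1))) by apply Rmin_r.
    assert (Ht2 : t <= x / 2) by apply Rmin_l.
    specialize (Key t ltac:(lra)).
    assert (t * (2 * (B + 1)) <= x * E x).
    { apply Rmult_le_reg_r with (/ (2 * (B + 1))).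
      - apply Rinv_0_lt_compat; lra.
      - rewrite Rmult_assoc, Rinv_r by lra. lra. }
    nra.
Qed.

Lemma gron (E dE : R -> R) d B : 0 < d ->
  (forall x, 0 < Rabs x < d -> is_derive E x (dE x) /\ 0 <= E x /\ E x <= B /\ x * dE x <= - E x) ->
  forall x, 0 < Rabs x < d -> E x = 0.
Proof.
  intros Hd H x Hx.
  destruct (Rlt_le_dec 0 x) as [Hp|Hn].
  - apply (gron_pos E dE d B); auto. intros y Hy. apply H. rewrite Rabs_right; lra.
    rewrite Rabs_right in Hx; lra.
  - assert (Hx' : x < 0).
    { destruct Hn as [Hn|Hn]; auto. subst. rewrite Rabs_R0 in Hx; lra. }
    rewrite Rabs_left in Hx by lra.
    assert (HG := gron_pos (fun s => E (- s)) (fun s => - dE (- s)) d B Hd).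
    replace x with (- (- x)) by ring.
    apply HG; [|lra].
    intros y Hy. destruct (H (- y)) as [H1 [H2 [H3 H4]]].
    { rewrite Rabs_left; lra. }
    split; [|split; [|split]]; auto.
    + cbv beta. apply (isd_eq (fun s => E (- s)) y (dE (- y) * (-1))); [ring|].
      apply (isd_comp E (fun s => - s) y (dE (- y)) (-1)); auto.
      apply is_derive_Reals.
      apply (derivable_pt_lim_opp (fun s => s)). apply derivable_pt_lim_id.
    + cbv beta. lra.
Qed.

Lemma poch_pos b n : 0 < b -> 0 < poch b n.
Proof.
  intros Hb; induction n; simpl; [lra|].
  apply Rmult_lt_0_compat; auto. pose proof (pos_INR n); lra.
Qed.

Lemma coef_rec a1 a2 a3 b1 b2 n : 0 < b1 -> 0 < b2 ->
  hyp32_coef a1 a2 a3 b1 b2 (S n) * ((INR n + 1) * (INR n + b1) * (INR n + b2)) =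
  hyp32_coef a1 a2 a3 b1 b2 n * ((INR n + a1) * (INR n + a2) * (INR n + a3)).
Proof.
  intros H1 H2. unfold hyp32_coef. simpl poch.
  rewrite fact_simpl, mult_INR, S_INR.
  pose proof (poch_pos b1 n H1). pose proof (poch_pos b2 n H2).
  pose proof (INR_fact_lt_0 n). pose proof (pos_INR n).
  field. repeat split; lra.
Qed.

Lemma coef_0 a1 a2 a3 b1 b2 : hyp32_coef a1 a2 a3 b1 b2 0 = 1.
Proof. unfold hyp32_coef; simpl; field. Qed.

Lemma coef_bound a1 a2 a3 b1 b2 : 0 < b1 -> 0 < b2 ->
  (forall n, Rabs ((INR n + a1) * (INR n + a2) * (INR n + a3)) <=
             (INR n + 1) * (INR n + b1) * (INR n + b2)) ->
  forall n, Rabs (hyp32_coef a1 a2 a3 b1 b2 n) <= 1.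
Proof.
  intros H1 H2 HU n. induction n.
  - rewrite coef_0, Rabs_R1; lra.
  - pose proof (coef_rec a1 a2 a3 b1 b2 n H1 H2) as E.
    pose proof (pos_INR n).
    assert (Tp : 0 < (INR n + 1) * (INR n + b1) * (INR n + b2)).
    { repeat apply Rmult_lt_0_compat; lra. }
    assert (Hc : hyp32_coef a1 a2 a3 b1 b2 (S n) =
      hyp32_coef a1 a2 a3 b1 b2 n * ((INR n + a1) * (INR n + a2) * (INR n + a3)) /
      ((INR n + 1) * (INR n + b1) * (INR n + b2))).
    { rewrite <- E. field. lra. }
    rewrite Hc. set (T := (INR n + 1) * (INR n + b1) * (INR n + b2)) in *.
    set (U := (INR n + a1) * (INR n + a2) * (INR n + a3)) in *.
    set (cn := hyp32_coef a1 a2 a3 b1 b2 n) in *.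
    unfold Rdiv. rewrite Rabs_mult, Rabs_mult, Rabs_inv, (Rabs_right T) by lra.
    specialize (HU n). fold U in HU. fold T in HU.
    pose proof (Rabs_pos cn). pose proof (Rabs_pos U).
    assert (K : Rabs cn * Rabs U <= T) by (apply Rle_trans with (1 * Rabs U); [apply Rmult_le_compat_r; lra| lra]).
    rewrite <- (Rinv_r T) by lra.
    apply Rmult_le_compat_r; [left; apply Rinv_0_lt_compat; lra| exact K].
Qed.

Definition wj (c : nat -> R) (j n : nat) : R := INR n ^ j * c n.

Lemma radius_c (c : nat -> R) : (forall n, Rabs (c n) <= 1) -> Rbar_le (Finite 1) (CV_radius c).
Proof.
  intros Hc. destruct (CV_radius_bounded c) as [Hub _].
  apply Hub. exists 1. intros n. rewrite pow1, Rmult_1_r. apply Hc.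
Qed.

Lemma wj_S c j n : wj c (S j) n = PS_incr_1 (PS_derive (wj c j)) n.
Proof.
  destruct n; unfold wj, PS_derive, PS_incr_1; simpl; [unfold zero; simpl; ring|]. rewrite <- S_INR. ring.
Qed.

Lemma radius_w c j : Rbar_le (Finite 1) (CV_radius c) -> Rbar_le (Finite 1) (CV_radius (wj c j)).
Proof.
  intros H. induction j.
  - rewrite (CV_radius_ext _ c); auto. intros n; unfold wj; simpl; ring.
  - rewrite (CV_radius_ext _ _ (wj_S c j)), CV_radius_incr_1, CV_radius_derive. auto.
Qed.

Lemma inside (c : nat -> R) j z : Rbar_le (Finite 1) (CV_radius c) -> Rabs z < 1 ->
  Rbar_lt (Finite (Rabs z)) (CV_radius (wj c j)).
Proof.
  intros H Hz. eapply Rbar_lt_le_trans; [|apply radius_w, H]. simpl; auto.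
Qed.

Lemma S_deriv c j z : Rbar_le (Finite 1) (CV_radius c) -> Rabs z < 1 ->
  is_derive (PSeries (wj c j)) z (PSeries (PS_derive (wj c j)) z) /\
  z * PSeries (PS_derive (wj c j)) z = PSeries (wj c (S j)) z.
Proof.
  intros H Hz. split.
  - apply is_derive_PSeries. apply inside; auto.
  - rewrite <- PSeries_incr_1. apply PSeries_ext. intros n; rewrite wj_S; auto.
Qed.

Lemma ex_w c j z : Rbar_le (Finite 1) (CV_radius c) -> Rabs z < 1 -> ex_pseries (wj c j) z.
Proof. intros; apply CV_radius_inside, inside; auto. Qed.

Lemma PS_lin4 (c : nat -> R) z al0 al1 al2 al3 :
  (forall j, ex_pseries (wj c j) z) ->
  PSeries (fun n => (al0 + al1 * INR n + al2 * INR n ^ 2 + al3 * INR n ^ 3) * c n) z =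
  al0 * PSeries (wj c 0) z + al1 * PSeries (wj c 1) z + al2 * PSeries (wj c 2) z + al3 * PSeries (wj c 3) z.
Proof.
  intros He.
  rewrite (PSeries_ext _ (PS_plus (PS_plus (PS_plus (PS_scal al0 (wj c 0)) (PS_scal al1 (wj c 1)))
     (PS_scal al2 (wj c 2))) (PS_scal al3 (wj c 3)))).
  2:{ intros n; unfold PS_plus, PS_scal, wj; simpl; unfold plus, scal; simpl;
      unfold mult; simpl. ring. }
  assert (Es : forall a j, ex_pseries (PS_scal a (wj c j)) z).
  { intros a j; apply ex_pseries_scal; [apply Rmult_comm| apply He]. }
  rewrite !PSeries_plus; auto; try (repeat apply ex_pseries_plus; auto).
  rewrite !PSeries_scal. reflexivity.
Qed.

Lemma S_ode a1 a2 a3 b1 b2 z : 0 < b1 -> 0 < b2 ->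
  let c := hyp32_coef a1 a2 a3 b1 b2 in
  Rbar_le (Finite 1) (CV_radius c) -> Rabs z < 1 ->
  let e1 := 1 - b1 in let e2 := 1 - b2 in
  let s j := PSeries (wj c j) z in
  s 3%nat - (e1 + e2) * s 2%nat + e1 * e2 * s 1%nat =
  z * (s 3%nat + (a1 + a2 + a3) * s 2%nat + (a1 * a2 + a1 * a3 + a2 * a3) * s 1%nat
       + a1 * a2 * a3 * s 0%nat).
Proof.
  intros Hb1 Hb2 c Hr Hz e1 e2 s.
  assert (He : forall j, ex_pseries (wj c j) z) by (intros; apply ex_w; auto).
  unfold s.
  transitivity (PSeries (fun n => (0 + e1 * e2 * INR n + (- (e1 + e2)) * INR n ^ 2 + 1 * INR n ^ 3) * c n) z).
  { rewrite PS_lin4 by auto. ring. }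
  rewrite (PSeries_ext _ (PS_incr_1 (fun n => (a1 * a2 * a3 + (a1 * a2 + a1 * a3 + a2 * a3) * INR n
       + (a1 + a2 + a3) * INR n ^ 2 + 1 * INR n ^ 3) * c n))).
  - rewrite PSeries_incr_1, PS_lin4 by auto. ring.
  - intros [|n]; simpl PS_incr_1.
    + simpl; unfold zero; simpl; ring.
    + unfold c. rewrite S_INR.
      transitivity (hyp32_coef a1 a2 a3 b1 b2 (S n) * ((INR n + 1) * (INR n + b1) * (INR n + b2))).
      { unfold e1, e2; ring. }
      rewrite coef_rec by auto. ring.
Qed.

Definition Uf (a1 a2 a3 t : R) := (t + a1) * (t + a2) * (t + a3).
Definition ek (e1 e2 : R) (k : nat) : R := match k with 0%nat => 0 | 1%nat => e1 | _ => e2 end.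
Definition Gk (e1 e2 : R) (k : nat) (s0 s1 s2 : R) : R :=
  match k with 0%nat => s2 - (e1 + e2) * s1 + e1 * e2 * s0
  | 1%nat => s2 - e2 * s1 | _ => s2 - e1 * s1 end.
Definition muk (a1 a2 a3 e1 e2 : R) (k : nat) : R :=
  match k with 0%nat => Uf a1 a2 a3 0 / (e1 * e2)
  | 1%nat => Uf a1 a2 a3 e1 / (e1 * (e1 - e2)) | _ => Uf a1 a2 a3 e2 / (e2 * (e2 - e1)) end.

Lemma G_alg a1 a2 a3 e1 e2 z s0 s1 s2 s3 d0 d1 d2 k :
  e1 <> 0 -> e2 <> 0 -> e1 <> e2 -> z <> 1 -> (k <= 2)%nat ->
  z * d0 = s1 -> z * d1 = s2 -> z * d2 = s3 ->
  s3 - (e1 + e2) * s2 + e1 * e2 * s1 =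
  z * (s3 + (a1 + a2 + a3) * s2 + (a1 * a2 + a1 * a3 + a2 * a3) * s1 + a1 * a2 * a3 * s0) ->
  z * Gk e1 e2 k d0 d1 d2 = ek e1 e2 k * Gk e1 e2 k s0 s1 s2 +
    z / (1 - z) * (muk a1 a2 a3 e1 e2 0 * Gk e1 e2 0 s0 s1 s2 +
                   muk a1 a2 a3 e1 e2 1 * Gk e1 e2 1 s0 s1 s2 +
                   muk a1 a2 a3 e1 e2 2 * Gk e1 e2 2 s0 s1 s2).
Proof.
  intros H1 H2 H12 Hz Hk E0 E1 E2 Ode.
  assert (Hz' : 1 - z <> 0) by lra.
  assert (S3 : s3 = ((e1 + e2) * s2 - e1 * e2 * s1 + z * ((a1 + a2 + a3) * s2 +
      (a1 * a2 + a1 * a3 + a2 * a3) * s1 + a1 * a2 * a3 * s0)) / (1 - z)).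
  { field_simplify_eq; [|auto]. lra. }
  assert (Hd : forall u v w, z * Gk e1 e2 k u v w = Gk e1 e2 k (z*u) (z*v) (z*w)).
  { intros; destruct k as [|[|k]]; simpl; ring. }
  rewrite Hd, E0, E1, E2, S3.
  unfold muk, Uf, ek.
  assert (e1 - e2 <> 0) by (intro; apply H12; lra).
  assert (e2 - e1 <> 0) by (intro; apply H12; lra).
  destruct k as [|[|[|k]]]; [ | | | lia]; simpl; field; repeat split; auto.
Qed.

Lemma lin_bound (W : R -> R) l : W 0 = 0 -> is_derive W 0 l ->
  exists dl, 0 < dl /\ forall h, Rabs h < dl -> Rabs (W h) <= (Rabs l + 1) * Rabs h.
Proof.
  intros H0 Hd. apply is_derive_Reals in Hd.
  destruct (Hd 1 Rlt_0_1) as [dl Hdl].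
  exists dl; split; [apply cond_pos|]. intros h Hh.
  destruct (Req_dec h 0) as [->|Hn].
  - rewrite H0, Rabs_R0; lra.
  - specialize (Hdl h Hn Hh). rewrite Rplus_0_l, H0, Rminus_0_r in Hdl.
    replace (W h) with ((W h / h - l) * h + l * h) by (field; auto).
    eapply Rle_trans; [apply Rabs_triang|]. rewrite !Rabs_mult.
    pose proof (Rabs_pos h). pose proof (Rabs_pos l). nra.
Qed.

Lemma prod_bound a b : Rabs (a * b) <= (a * a + b * b) / 2.
Proof.
  pose proof (Rle_0_sqr (a - b)). pose proof (Rle_0_sqr (a + b)). unfold Rsqr in *.
  destruct (Rcase_abs (a * b)) as [Hab|Hab]; [rewrite Rabs_left by lra | rewrite Rabs_right by lra]; lra.
Qed.

Lemma SM_bound y0 y1 y2 m0 m1 m2 :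
  Rabs ((y0 + y1 + y2) * (m0 * y0 + m1 * y1 + m2 * y2)) <=
  3 * (Rabs m0 + Rabs m1 + Rabs m2) * (y0 * y0 + y1 * y1 + y2 * y2).
Proof.
  set (E := y0 * y0 + y1 * y1 + y2 * y2).
  assert (B : forall a b, (a = y0 \/ a = y1 \/ a = y2) -> (b = y0 \/ b = y1 \/ b = y2) -> Rabs (a * b) <= E).
  { intros a b Ha Hb. eapply Rle_trans; [apply prod_bound|].
    unfold E. destruct Ha as [ -> | [ -> | -> ] ]; destruct Hb as [ -> | [ -> | -> ] ]; nra. }
  assert (C : forall a, (a = y0 \/ a = y1 \/ a = y2) -> Rabs (a * (y0 + y1 + y2)) <= 3 * E).
  { intros a Ha. replace (a * (y0 + y1 + y2)) with (a * y0 + a * y1 + a * y2) by ring.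
    eapply Rle_trans; [apply Rabs_triang|].
    eapply Rle_trans; [apply Rplus_le_compat_r, Rabs_triang|].
    pose proof (B a y0 Ha (or_introl eq_refl)).
    pose proof (B a y1 Ha (or_intror (or_introl eq_refl))).
    pose proof (B a y2 Ha (or_intror (or_intror eq_refl))). lra. }
  replace ((y0 + y1 + y2) * (m0 * y0 + m1 * y1 + m2 * y2)) with
    (m0 * (y0 * (y0 + y1 + y2)) + m1 * (y1 * (y0 + y1 + y2)) + m2 * (y2 * (y0 + y1 + y2))) by ring.
  eapply Rle_trans; [apply Rabs_triang|].
  eapply Rle_trans; [apply Rplus_le_compat_r, Rabs_triang|].
  rewrite !Rabs_mult.
  pose proof (C y0 (or_introl eq_refl)). pose proof (C y1 (or_intror (or_introl eq_refl))).
  pose proof (C y2 (or_intror (or_intror eq_refl))).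
  rewrite Rabs_mult in *.
  pose proof (Rabs_pos m0). pose proof (Rabs_pos m1). pose proof (Rabs_pos m2).
  assert (0 <= E) by (unfold E; nra).
  nra.
Qed.

Lemma sys_zero (psi dpsi W0 W1 W2 dW0 dW1 dW2 : R -> R) (e0 e1 e2 m0 m1 m2 c d : R) :
  0 < d -> 0 < c -> e0 <= 3/7 -> e1 <= 3/7 -> e2 <= 3/7 ->
  (forall x, Rabs x < d -> is_derive W0 x (dW0 x) /\ is_derive W1 x (dW1 x) /\ is_derive W2 x (dW2 x)) ->
  W0 0 = 0 -> W1 0 = 0 -> W2 0 = 0 ->
  (forall x, 0 < Rabs x < d ->
     is_derive psi x (dpsi x) /\ psi x <> 0 /\ 15/16 <= x * dpsi x / psi x /\
     Rabs (psi x / (1 - psi x)) * (3 * (Rabs m0 + Rabs m1 + Rabs m2)) <= 1/28 /\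
     c * Rabs x <= Rabs (psi x) /\
     psi x * dW0 x = dpsi x * (e0 * W0 x + psi x / (1 - psi x) * (m0 * W0 x + m1 * W1 x + m2 * W2 x)) /\
     psi x * dW1 x = dpsi x * (e1 * W1 x + psi x / (1 - psi x) * (m0 * W0 x + m1 * W1 x + m2 * W2 x)) /\
     psi x * dW2 x = dpsi x * (e2 * W2 x + psi x / (1 - psi x) * (m0 * W0 x + m1 * W1 x + m2 * W2 x))) ->
  exists d', 0 < d' /\ forall x, Rabs x < d' -> W0 x = 0 /\ W1 x = 0 /\ W2 x = 0.
Proof.
  intros Hd Hc He0 He1 He2 HW H0 H1 H2 Hx.
  assert (Z0 : Rabs 0 < d) by (rewrite Rabs_R0; lra).
  destruct (HW 0 Z0) as [D0 [D1 D2]].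
  destruct (lin_bound W0 _ H0 D0) as [d0 [Hd0 B0]].
  destruct (lin_bound W1 _ H1 D1) as [d1 [Hd1 B1]].
  destruct (lin_bound W2 _ H2 D2) as [d2 [Hd2 B2]].
  set (k0 := Rabs (dW0 0) + 1). set (k1 := Rabs (dW1 0) + 1). set (k2 := Rabs (dW2 0) + 1).
  fold k0 in B0; fold k1 in B1; fold k2 in B2.
  set (d' := Rmin d (Rmin d0 (Rmin d1 d2))).
  assert (Hd' : 0 < d') by (unfold d'; repeat apply Rmin_glb_lt; auto).
  assert (Hdd : d' <= d /\ d' <= d0 /\ d' <= d1 /\ d' <= d2).
  { unfold d'. pose proof (Rmin_l d (Rmin d0 (Rmin d1 d2))); pose proof (Rmin_r d (Rmin d0 (Rmin d1 d2)));
    pose proof (Rmin_l d0 (Rmin d1 d2)); pose proof (Rmin_r d0 (Rmin d1 d2));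
    pose proof (Rmin_l d1 d2); pose proof (Rmin_r d1 d2). lra. }
  set (y0 := fun x => W0 x / psi x). set (y1 := fun x => W1 x / psi x). set (y2 := fun x => W2 x / psi x).
  set (dy0 := fun x => (dW0 x * psi x - W0 x * dpsi x) / psi x ^ 2).
  set (dy1 := fun x => (dW1 x * psi x - W1 x * dpsi x) / psi x ^ 2).
  set (dy2 := fun x => (dW2 x * psi x - W2 x * dpsi x) / psi x ^ 2).
  set (E := fun x => y0 x * y0 x + y1 x * y1 x + y2 x * y2 x).
  set (dE := fun x => 2 * (y0 x * dy0 x + y1 x * dy1 x + y2 x * dy2 x)).
  set (B := (k0 * k0 + k1 * k1 + k2 * k2) / (c * c)).
  assert (Hy : forall x, 0 < Rabs x < d' -> forall k W, (W = W0 /\ k = k0 \/ W = W1 /\ k = k1 \/ W = W2 /\ k = k2) ->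
     (W x / psi x) * (W x / psi x) <= k * k / (c * c)).
  { intros x Hx' k W HWk.
    destruct (Hx x ltac:(lra)) as [_ [Hp [_ [_ [Hlow _]]]]].
    assert (Hwk : Rabs (W x) <= k * Rabs x).
    { destruct HWk as [ [ -> -> ] | [ [ -> -> ] | [ -> -> ] ] ]; [apply B0|apply B1|apply B2]; lra. }
    assert (0 <= k) by (destruct HWk as [ [ -> -> ] | [ [ -> -> ] | [ -> -> ] ] ]; unfold k0, k1, k2; pose proof (Rabs_pos (dW0 0)); pose proof (Rabs_pos (dW1 0)); pose proof (Rabs_pos (dW2 0)); lra).
    assert (Hq : Rabs (W x / psi x) <= k / c).
    { rewrite Rabs_div by auto. apply Rle_trans with (k * Rabs x / (c * Rabs x)).
      - unfold Rdiv. apply Rmult_le_compat; auto using Rabs_pos.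
        + left; apply Rinv_0_lt_compat. apply Rabs_pos_lt; auto.
        + apply Rinv_le_contravar; auto. apply Rmult_lt_0_compat; lra.
      - right. field. split; lra. }
    set (q := W x / psi x) in *.
    assert (Eq : q * q = Rabs q * Rabs q).
    { rewrite <- Rabs_mult. rewrite Rabs_right; nra. }
    rewrite Eq. pose proof (Rabs_pos q).
    replace (k * k / (c * c)) with ((k / c) * (k / c)) by (field; lra).
    apply Rmult_le_compat; auto. }
  exists d'. split; auto.
  assert (Main : forall x, 0 < Rabs x < d' -> E x = 0).
  { apply (gron E dE d' B Hd'). intros x Hx'.
    destruct (Hx x ltac:(lra)) as [Dp [Hp [Hk [Hr [Hlow [R0 [R1 R2]]]]]]].
    destruct (HW x ltac:(lra)) as [Dw0 [Dw1 Dw2]].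
    assert (Dy : forall W dW, is_derive W x (dW x) -> is_derive (fun t => W t / psi t) x ((dW x * psi x - W x * dpsi x) / psi x ^ 2)).
    { intros W dW DW. apply isd_div; auto. }
    split; [|split; [|split]].
    - unfold E, dE.
      apply (isd_eq _ _ ((dy0 x * y0 x + y0 x * dy0 x + (dy1 x * y1 x + y1 x * dy1 x)) + (dy2 x * y2 x + y2 x * dy2 x))); [ring|].
      apply (isd_plus (fun t => y0 t * y0 t + y1 t * y1 t) (fun t => y2 t * y2 t)).
      + apply (isd_plus (fun t => y0 t * y0 t) (fun t => y1 t * y1 t)); apply isd_mult; unfold y0, y1, dy0, dy1; apply Dy; auto.
      + apply isd_mult; unfold y2, dy2; apply Dy; auto.
    - unfold E; nra.
    - unfold E, B.
      pose proof (Hy x Hx' k0 W0 (or_introl (conj eq_refl eq_refl))).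
      pose proof (Hy x Hx' k1 W1 (or_intror (or_introl (conj eq_refl eq_refl)))).
      pose proof (Hy x Hx' k2 W2 (or_intror (or_intror (conj eq_refl eq_refl)))).
      unfold y0, y1, y2. replace ((k0 * k0 + k1 * k1 + k2 * k2) / (c * c)) with
        (k0 * k0 / (c * c) + k1 * k1 / (c * c) + k2 * k2 / (c * c)) by (field; lra). lra.
    - set (rho := psi x / (1 - psi x)) in *.
      set (kap := x * dpsi x / psi x) in *.
      set (M := m0 * y0 x + m1 * y1 x + m2 * y2 x).
      assert (X0 : x * dy0 x = kap * ((e0 - 1) * y0 x + rho * M)).
      { unfold dy0, kap, M, y0, y1, y2. rewrite (Rmult_comm (dW0 x)), R0. field. auto. }
      assert (X1 : x * dy1 x = kap * ((e1 - 1) * y1 x + rho * M)).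
      { unfold dy1, kap, M, y0, y1, y2. rewrite (Rmult_comm (dW1 x)), R1. field. auto. }
      assert (X2 : x * dy2 x = kap * ((e2 - 1) * y2 x + rho * M)).
      { unfold dy2, kap, M, y0, y1, y2. rewrite (Rmult_comm (dW2 x)), R2. field. auto. }
      assert (XE : x * dE x = 2 * kap * ((e0 - 1) * (y0 x * y0 x) + (e1 - 1) * (y1 x * y1 x) + (e2 - 1) * (y2 x * y2 x)
                   + rho * ((y0 x + y1 x + y2 x) * M))).
      { unfold dE. transitivity (2 * (y0 x * (x * dy0 x) + y1 x * (x * dy1 x) + y2 x * (x * dy2 x))); [ring|].
        rewrite X0, X1, X2. ring. }
      rewrite XE.
      pose proof (SM_bound (y0 x) (y1 x) (y2 x) m0 m1 m2) as SB. fold M in SB.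
      set (S := (y0 x + y1 x + y2 x) * M) in *.
      set (Ex := y0 x * y0 x + y1 x * y1 x + y2 x * y2 x) in *.
      assert (HE : E x = Ex) by reflexivity. rewrite HE.
      assert (Ex0 : 0 <= Ex) by (unfold Ex; nra).
      assert (Hm : 0 <= 3 * (Rabs m0 + Rabs m1 + Rabs m2)) by (pose proof (Rabs_pos m0); pose proof (Rabs_pos m1); pose proof (Rabs_pos m2); lra).
      assert (RS : Rabs (rho * S) <= Ex / 28).
      { rewrite Rabs_mult. apply Rle_trans with (Rabs rho * (3 * (Rabs m0 + Rabs m1 + Rabs m2) * Ex)).
        - apply Rmult_le_compat_l; auto using Rabs_pos.
        - pose proof (Rabs_pos rho). nra. }
      assert (Q1 : (e0 - 1) * (y0 x * y0 x) + (e1 - 1) * (y1 x * y1 x) + (e2 - 1) * (y2 x * y2 x) <= - (4/7) * Ex).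
      { unfold Ex. assert (0 <= y0 x * y0 x) by nra. assert (0 <= y1 x * y1 x) by nra. assert (0 <= y2 x * y2 x) by nra. nra. }
      assert (Q2 : rho * S <= Ex / 28) by (apply Rle_trans with (Rabs (rho * S)); [apply Rle_abs| auto]).
      set (Q := (e0 - 1) * (y0 x * y0 x) + (e1 - 1) * (y1 x * y1 x) + (e2 - 1) * (y2 x * y2 x) + rho * S).
      assert (HQ : Q <= - (15/28) * Ex) by (unfold Q; lra).
      nra. }
  intros x Hx'.
  destruct (Req_dec x 0) as [->|Hn]; [auto|].
  assert (Hx0 : 0 < Rabs x < d') by (split; auto; apply Rabs_pos_lt; auto).
  pose proof (Main x Hx0) as HE. unfold E in HE.
  destruct (Hx x ltac:(lra)) as [_ [Hp _]].
  assert (y0 x = 0 /\ y1 x = 0 /\ y2 x = 0) as [Z0' [Z1' Z2']] by (repeat split; nra).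
  unfold y0, y1, y2 in *.
  repeat split.
  - replace (W0 x) with (W0 x / psi x * psi x) by (field; auto). rewrite Z0'; ring.
  - replace (W1 x) with (W1 x / psi x * psi x) by (field; auto). rewrite Z1'; ring.
  - replace (W2 x) with (W2 x / psi x * psi x) by (field; auto). rewrite Z2'; ring.
Qed.

Lemma Gk_derive e1 e2 k (f0 f1 f2 : R -> R) d0 d1 d2 z :
  is_derive f0 z d0 -> is_derive f1 z d1 -> is_derive f2 z d2 ->
  is_derive (fun t => Gk e1 e2 k (f0 t) (f1 t) (f2 t)) z (Gk e1 e2 k d0 d1 d2).
Proof.
  intros D0 D1 D2.
  assert (Sc : forall (f : R -> R) a d, is_derive f z d -> is_derive (fun t => a * f t) z (a * d)).
  { intros f a d Hf. apply is_derive_scal; auto. }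
  destruct k as [|[|k]]; simpl.
  - apply (isd_plus (fun t => f2 t - (e1 + e2) * f1 t) (fun t => e1 * e2 * f0 t)).
    + apply (isd_minus f2 (fun t => (e1 + e2) * f1 t)); auto.
    + auto.
  - apply (isd_minus f2 (fun t => e2 * f1 t)); auto.
  - apply (isd_minus f2 (fun t => e1 * f1 t)); auto.
Qed.

Theorem generic (a1 a2 a3 b1 b2 : R) (psi dpsi h H0 H1 H2 dH0 dH1 dH2 : R -> R) (d c : R) :
  let e1 := 1 - b1 in let e2 := 1 - b2 in
  let m0 := muk a1 a2 a3 e1 e2 0 in let m1 := muk a1 a2 a3 e1 e2 1 in let m2 := muk a1 a2 a3 e1 e2 2 in
  0 < b1 -> 0 < b2 -> e1 <> 0 -> e2 <> 0 -> e1 <> e2 -> e1 <= 3/7 -> e2 <= 3/7 ->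
  (forall n, Rabs ((INR n + a1) * (INR n + a2) * (INR n + a3)) <=
             (INR n + 1) * (INR n + b1) * (INR n + b2)) ->
  0 < d -> 0 < c -> psi 0 = 0 ->
  (forall x, Rabs x < d -> is_derive psi x (dpsi x) /\ Rabs (psi x) < 1 /\
     is_derive H0 x (dH0 x) /\ is_derive H1 x (dH1 x) /\ is_derive H2 x (dH2 x) /\
     h x = H0 x / (e1 * e2) + H1 x / (e1 * (e1 - e2)) + H2 x / (e2 * (e2 - e1))) ->
  H0 0 = e1 * e2 -> H1 0 = 0 -> H2 0 = 0 ->
  (forall x, 0 < Rabs x < d ->
     psi x <> 0 /\ 15/16 <= x * dpsi x / psi x /\
     Rabs (psi x / (1 - psi x)) * (3 * (Rabs m0 + Rabs m1 + Rabs m2)) <= 1/28 /\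
     c * Rabs x <= Rabs (psi x) /\
     psi x * dH0 x = dpsi x * (0 * H0 x + psi x / (1 - psi x) * (m0 * H0 x + m1 * H1 x + m2 * H2 x)) /\
     psi x * dH1 x = dpsi x * (e1 * H1 x + psi x / (1 - psi x) * (m0 * H0 x + m1 * H1 x + m2 * H2 x)) /\
     psi x * dH2 x = dpsi x * (e2 * H2 x + psi x / (1 - psi x) * (m0 * H0 x + m1 * H1 x + m2 * H2 x))) ->
  exists delta, 0 < delta /\ forall x, Rabs x < delta -> hyp32_sum a1 a2 a3 b1 b2 (psi x) (h x).
Proof.
  intros e1 e2 m0 m1 m2 Hb1 Hb2 He1 He2 He12 Le1 Le2 HU Hd Hc Hp0 Hx H00 H10 H20 Hrel.
  set (cc := hyp32_coef a1 a2 a3 b1 b2).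
  assert (Hr : Rbar_le (Finite 1) (CV_radius cc)).
  { apply radius_c. apply coef_bound; auto. }
  set (s := fun j z => PSeries (wj cc j) z).
  set (dS := fun j z => PSeries (PS_derive (wj cc j)) z).
  set (Gz := fun k z => Gk e1 e2 k (s 0%nat z) (s 1%nat z) (s 2%nat z)).
  set (dGz := fun k z => Gk e1 e2 k (dS 0%nat z) (dS 1%nat z) (dS 2%nat z)).
  assert (DG : forall k z, Rabs z < 1 -> is_derive (Gz k) z (dGz k z)).
  { intros k z Hz. unfold Gz, dGz.
    apply Gk_derive; apply (proj1 (S_deriv cc _ z Hr Hz)). }
  assert (RG : forall k z, (k <= 2)%nat -> Rabs z < 1 ->
     z * dGz k z = ek e1 e2 k * Gz k z + z / (1 - z) * (m0 * Gz 0%nat z + m1 * Gz 1%nat z + m2 * Gz 2%nat z)).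
  { intros k z Hk Hz. unfold Gz, dGz, m0, m1, m2.
    assert (z <> 1) by (intro; subst; rewrite Rabs_R1 in Hz; lra).
    apply (G_alg a1 a2 a3 e1 e2 z (s 0%nat z) (s 1%nat z) (s 2%nat z) (s 3%nat z) (dS 0%nat z) (dS 1%nat z) (dS 2%nat z) k); auto.
    - apply (proj2 (S_deriv cc 0 z Hr Hz)).
    - apply (proj2 (S_deriv cc 1 z Hr Hz)).
    - apply (proj2 (S_deriv cc 2 z Hr Hz)).
    - apply (S_ode a1 a2 a3 b1 b2 z Hb1 Hb2 Hr Hz). }
  set (W := fun k x => Gz k (psi x) - match k with 0%nat => H0 x | 1%nat => H1 x | _ => H2 x end).
  set (dW := fun k x => dGz k (psi x) * dpsi x - match k with 0%nat => dH0 x | 1%nat => dH1 x | _ => dH2 x end).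
  assert (s0 : forall j, s j 0 = match j with 0%nat => 1 | _ => 0 end).
  { intros j. unfold s. rewrite PSeries_0. unfold wj, cc. rewrite coef_0.
    destruct j; simpl; ring. }
  destruct (sys_zero psi dpsi (W 0%nat) (W 1%nat) (W 2%nat) (dW 0%nat) (dW 1%nat) (dW 2%nat)
              0 e1 e2 m0 m1 m2 c d) as [d' [Hd' Hz]]; auto; try lra.
  - intros x Hx'. destruct (Hx x Hx') as [Dp [Hp1 [D0 [D1 [D2 _]]]]].
    split; [|split]; unfold W, dW.
    + apply (isd_minus (fun t => Gz 0%nat (psi t)) H0); [|exact D0].
      apply (isd_comp (Gz 0%nat) psi); [exact Dp| apply DG; exact Hp1].
    + apply (isd_minus (fun t => Gz 1%nat (psi t)) H1); [|exact D1].
      apply (isd_comp (Gz 1%nat) psi); [exact Dp| apply DG; exact Hp1].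
    + apply (isd_minus (fun t => Gz 2%nat (psi t)) H2); [|exact D2].
      apply (isd_comp (Gz 2%nat) psi); [exact Dp| apply DG; exact Hp1].
  - unfold W, Gz. rewrite Hp0, !s0, H00. simpl. ring.
  - unfold W, Gz. rewrite Hp0, !s0, H10. simpl. ring.
  - unfold W, Gz. rewrite Hp0, !s0, H20. simpl. ring.
  - intros x Hx'. destruct (Hx x ltac:(lra)) as [Dp [Hp1 _]].
    destruct (Hrel x Hx') as [Hn [Hk [Hrh [Hl [R0 [R1 R2]]]]]].
    pose proof (RG 0%nat (psi x) ltac:(lia) Hp1) as G0.
    pose proof (RG 1%nat (psi x) ltac:(lia) Hp1) as G1.
    pose proof (RG 2%nat (psi x) ltac:(lia) Hp1) as G2.
    simpl ek in G0, G1, G2.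
    refine (conj Dp (conj Hn (conj Hk (conj Hrh (conj Hl (conj _ (conj _ _))))))); unfold W, dW.
    + transitivity (dpsi x * (psi x * dGz 0%nat (psi x)) - psi x * dH0 x); [ring|].
      rewrite G0, R0. ring.
    + transitivity (dpsi x * (psi x * dGz 1%nat (psi x)) - psi x * dH1 x); [ring|].
      rewrite G1, R1. ring.
    + transitivity (dpsi x * (psi x * dGz 2%nat (psi x)) - psi x * dH2 x); [ring|].
      rewrite G2, R2. ring.
  - exists (Rmin d d'). split; [apply Rmin_glb_lt; auto|].
    intros x Hx'.
    assert (Hxd : Rabs x < d) by (eapply Rlt_le_trans; [exact Hx'| apply Rmin_l]).
    assert (Hxd' : Rabs x < d') by (eapply Rlt_le_trans; [exact Hx'| apply Rmin_r]).
    destruct (Hz x Hxd') as [Z0 [Z1 Z2]].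
    destruct (Hx x Hxd) as [_ [Hp1 [_ [_ [_ Hh]]]]].
    unfold W in Z0, Z1, Z2.
    assert (Eh : h x = s 0%nat (psi x)).
    { rewrite Hh. 
      replace (H0 x) with (Gz 0%nat (psi x)) by lra.
      replace (H1 x) with (Gz 1%nat (psi x)) by lra.
      replace (H2 x) with (Gz 2%nat (psi x)) by lra.
      unfold Gz; simpl. field. repeat split; auto.
      - intro; apply He12; lra.
      - intro; apply He12; lra. }
    rewrite Eh. unfold hyp32_sum. apply is_series_Reals.
    unfold s. rewrite (PSeries_ext _ cc) by (intros n; unfold wj; simpl; ring).
    apply is_pseries_R. apply PSeries_correct. apply CV_radius_inside.
    eapply Rbar_lt_le_trans; [|exact Hr]. simpl; auto.
Qed.

Definition Nl : list Z := [(-1); (-510); (14631); (-80090); (218058); (-316290); (253239); (-131562); (70998); (-37950); (8955); (522); (-1)]%Z.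
Definition F1l : list Z := [1;5;-8;1]%Z.
Definition G0l : list Z := [1;-1;1]%Z.
Definition G1l : list Z := [1;-235;1430;-1695;270;229;1]%Z.
Definition Xl : list Z := [0;1]%Z.
Definition Xm1l : list Z := [-1;1]%Z.
Definition Gl := pmul G0l G1l.
Fixpoint ppow (p : list Z) (n : nat) : list Z := match n with O => (1%Z :: nil) | S k => pmul p (ppow p k) end.
Definition Pl := pscal 1728 (pmul (pmul Xl Xm1l) (ppow F1l 7)).
Definition Ql := ppow Gl 3.

Lemma pev_pow p n x : pev (ppow p n) x = pev p x ^ n.
Proof. induction n; simpl; [ring|]. rewrite pev_mul, IHn; ring. Qed.
Lemma pev_psub p q x : pev (psub p q) x = pev p x - pev q x.
Proof. unfold psub. rewrite pev_add, pev_scal. ring. Qed.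

Lemma eF1 x : pev F1l x = F1 x. Proof. unfold F1; simpl; ring. Qed.
Lemma eG0 x : pev G0l x = G0 x. Proof. unfold G0; simpl; ring. Qed.
Lemma eG1 x : pev G1l x = G1 x. Proof. unfold G1; simpl; ring. Qed.
Lemma eX x : pev Xl x = x. Proof. simpl; ring. Qed.
Lemma eXm1 x : pev Xm1l x = x - 1. Proof. simpl; ring. Qed.
Lemma eG x : pev Gl x = G0 x * G1 x. Proof. unfold Gl; rewrite pev_mul, eG0, eG1; auto. Qed.

Lemma ePsi x : Phi3 x = pev Pl x / pev Ql x.
Proof.
  unfold Pl, Ql, Phi3. rewrite pev_scal, !pev_mul, !pev_pow, eX, eXm1, eF1, eG. simpl IZR. 
  unfold Rdiv; f_equal; [ring|]. f_equal; ring.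
Qed.

Definition dpsi (x : R) : R := 1728 * F1 x ^ 6 * pev Nl x / (G0 x * G1 x) ^ 4.

Lemma refl_dpsi : allzero (psub (psub (pmul (pder Pl) Ql) (pmul Pl (pder Ql)))
   (pscal 1728 (pmul (pmul (ppow F1l 6) Nl) (pmul Gl Gl)))) = true.
Proof. vm_compute. reflexivity. Qed.

Lemma refl_N : allzero (psub (ppow Gl 3) (padd (pscal 1728 (pmul (pmul Xl Xm1l) (ppow F1l 7))) (pmul Nl Nl))) = true.
Proof. vm_compute. reflexivity. Qed.

Lemma psi_derive x : G0 x <> 0 -> G1 x <> 0 -> is_derive Phi3 x (dpsi x).
Proof.
  intros H0 H1.
  assert (HQ : pev Ql x <> 0).
  { unfold Ql. rewrite pev_pow, eG. apply pow_nonzero. apply Rmult_integral_contrapositive; auto. }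
  apply (isd_ext (fun t => pev Pl t / pev Ql t)); [intros; rewrite ePsi; auto|].
  eapply isd_eq; [|apply isd_div; [apply pder_correct|apply pder_correct|auto]].
  pose proof (allzero_pev _ x refl_dpsi) as E.
  rewrite !pev_psub, !pev_mul, pev_scal, !pev_mul, !pev_pow, eF1, eG in E.
  assert (HQe : pev Ql x = (G0 x * G1 x) ^ 3) by (unfold Ql; rewrite pev_pow, eG; auto).
  rewrite HQe in E, HQ |- *.
  set (a := pev (pder Pl) x) in *. set (b := pev (pder Ql) x) in *. set (p := pev Pl x) in *.
  set (g := G0 x * G1 x) in *.
  assert (g <> 0) by (unfold g; apply Rmult_integral_contrapositive; auto).
  simpl IZR in E.
  replace (a * g ^ 3 - p * b) with (1728 * (F1 x ^ 6 * pev Nl x * (g * g))) by lra.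
  unfold dpsi. fold g. field. auto.
Qed.

Lemma one_minus_psi x : G0 x <> 0 -> G1 x <> 0 -> 1 - Phi3 x = pev Nl x ^ 2 / (G0 x * G1 x) ^ 3.
Proof.
  intros H0 H1.
  pose proof (allzero_pev _ x refl_N) as E.
  rewrite pev_psub, pev_add, pev_scal, !pev_mul, !pev_pow, eX, eXm1, eF1, eG in E.
  unfold Phi3. simpl IZR in E.
  assert (G0 x * G1 x <> 0) by (apply Rmult_integral_contrapositive; auto).
  apply (Rmult_eq_reg_r ((G0 x * G1 x) ^ 3)); [|apply pow_nonzero; auto].
  field_simplify; auto. rewrite Rmult_comm. 
  replace (pev Nl x ^ 2) with (pev Nl x * pev Nl x) by ring.
  replace ((G0 x * G1 x) ^ 3) with (G0 x ^ 3 * G1 x ^ 3) in E by ring. lra.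
Qed.

Lemma near0 (f : R -> R) v eps : continuity_pt f 0 -> f 0 = v -> 0 < eps ->
  exists dl, 0 < dl /\ forall x, Rabs x < dl -> Rabs (f x - v) < eps.
Proof.
  intros Hc Hv He. destruct (Hc eps He) as [dl [Hdl H]].
  exists dl; split; auto. intros x Hx.
  destruct (Req_dec x 0) as [->|Hn].
  - rewrite Hv; unfold Rminus; rewrite Rplus_opp_r, Rabs_R0; auto.
  - rewrite <- Hv. apply (H x). split; [unfold D_x, no_cond; split; auto|].
    simpl; unfold R_dist; rewrite Rminus_0_r; auto.
Qed.

Lemma cont_pev p x : continuity_pt (pev p) x.
Proof. apply (isd_cont _ _ _ (pder_correct p x)). Qed.

Lemma cont_ratio p q x : pev q x <> 0 -> continuity_pt (fun t => pev p t / pev q t) x.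
Proof.
  intros H. apply (isd_cont _ _ _ (isd_div _ _ _ _ _ (pder_correct p x) (pder_correct q x) H)).
Qed.

Definition qlist := pscal 1728 (pmul Xm1l (ppow F1l 7)).
Definition Klist := pmul Xm1l (pmul F1l Gl).

Lemma ePsi_q x : Phi3 x = x * (pev qlist x / pev Ql x).
Proof.
  rewrite ePsi. unfold Pl, qlist. rewrite !pev_scal, !pev_mul, eX. unfold Rdiv. ring.
Qed.

Lemma cut (P : R -> Prop) d1 d2 : 0 < d1 -> 0 < d2 ->
  exists d, 0 < d /\ d <= d1 /\ d <= d2.
Proof. intros. exists (Rmin d1 d2). split; [apply Rmin_glb_lt; auto|split; [apply Rmin_l|apply Rmin_r]]. Qed.

Lemma local_facts : exists d, 0 < d /\ forall x, Rabs x < d ->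
  1/2 < G0 x /\ 1/2 < G1 x /\ 1/2 < F1 x /\ 1/2 < 1 - x /\ pev Nl x < -1/2 /\
  Rabs (Phi3 x) < 1/1000 /\ 1 <= Rabs (pev qlist x / pev Ql x) /\
  (x <> 0 -> 15/16 <= x * dpsi x / Phi3 x).
Proof.
  assert (Q0 : pev Ql 0 = 1) by (unfold Ql; rewrite pev_pow, eG; unfold G0, G1; ring).
  assert (K0 : pev Klist 0 = -1) by (unfold Klist; rewrite !pev_mul, eXm1, eF1, eG; unfold F1, G0, G1; ring).
  assert (N0 : pev Nl 0 = -1) by (simpl; ring).
  destruct (near0 (pev G0l) 1 (1/2) (cont_pev _ 0) ltac:(simpl; ring) ltac:(lra)) as [d1 [Hd1 A1]].
  destruct (near0 (pev G1l) 1 (1/2) (cont_pev _ 0) ltac:(simpl; ring) ltac:(lra)) as [d2 [Hd2 A2]].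
  destruct (near0 (pev F1l) 1 (1/2) (cont_pev _ 0) ltac:(simpl; ring) ltac:(lra)) as [d3 [Hd3 A3]].
  destruct (near0 (pev Nl) (-1) (1/2) (cont_pev _ 0) N0 ltac:(lra)) as [d4 [Hd4 A4]].
  destruct (near0 (fun t => pev Pl t / pev Ql t) 0 (1/1000) (cont_ratio Pl Ql 0 ltac:(first [rewrite Q0 | rewrite K0]; lra))
     ltac:(cbv beta; unfold Pl; rewrite pev_scal, !pev_mul, eX; simpl IZR; field; lra) ltac:(lra)) as [d5 [Hd5 A5]].
  destruct (near0 (fun t => pev qlist t / pev Ql t) (-1728) 1 (cont_ratio qlist Ql 0 ltac:(first [rewrite Q0 | rewrite K0]; lra))
     ltac:(cbv beta; unfold qlist; rewrite pev_scal, !pev_mul, eXm1, pev_pow, eF1, Q0; unfold F1; simpl IZR; field) ltac:(lra)) as [d6 [Hd6 A6]].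
  destruct (near0 (fun t => pev Nl t / pev Klist t) 1 (1/16) (cont_ratio Nl Klist 0 ltac:(first [rewrite Q0 | rewrite K0]; lra))
     ltac:(cbv beta; rewrite N0, K0; field) ltac:(lra)) as [d7 [Hd7 A7]].
  set (d := Rmin (1/2) (Rmin d1 (Rmin d2 (Rmin d3 (Rmin d4 (Rmin d5 (Rmin d6 d7))))))).
  assert (Hd : 0 < d) by (unfold d; repeat apply Rmin_glb_lt; auto; lra).
  exists d; split; auto. intros x Hx.
  assert (Le : forall a b, Rmin a b <= a /\ Rmin a b <= b) by (intros; split; [apply Rmin_l|apply Rmin_r]).
  assert (Hx1 : Rabs x < 1/2 /\ Rabs x < d1 /\ Rabs x < d2 /\ Rabs x < d3 /\ Rabs x < d4 /\ Rabs x < d5 /\ Rabs x < d6 /\ Rabs x < d7).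
  { unfold d in Hx.
    destruct (Le (1/2) (Rmin d1 (Rmin d2 (Rmin d3 (Rmin d4 (Rmin d5 (Rmin d6 d7))))))).
    destruct (Le d1 (Rmin d2 (Rmin d3 (Rmin d4 (Rmin d5 (Rmin d6 d7)))))).
    destruct (Le d2 (Rmin d3 (Rmin d4 (Rmin d5 (Rmin d6 d7))))).
    destruct (Le d3 (Rmin d4 (Rmin d5 (Rmin d6 d7)))).
    destruct (Le d4 (Rmin d5 (Rmin d6 d7))).
    destruct (Le d5 (Rmin d6 d7)).
    destruct (Le d6 d7). lra. }
  destruct Hx1 as [B0 [B1 [B2 [B3 [B4 [B5 [B6 B7]]]]]]].
  specialize (A1 x B1); specialize (A2 x B2); specialize (A3 x B3); specialize (A4 x B4);
  specialize (A5 x B5); specialize (A6 x B6); specialize (A7 x B7).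
  rewrite eG0 in A1; rewrite eG1 in A2; rewrite eF1 in A3.
  apply Rabs_def2 in A1; apply Rabs_def2 in A2; apply Rabs_def2 in A3; apply Rabs_def2 in A4.
  apply Rabs_def2 in A6; apply Rabs_def2 in A7.
  assert (Bx : x < 1/2 /\ - (1/2) < x) by (apply Rabs_def2; auto).
  split; [lra|]. split; [lra|]. split; [lra|]. split; [lra|]. split; [lra|].
  split. { rewrite ePsi. rewrite Rminus_0_r in A5. exact A5. }
  split. { rewrite Rabs_left by lra. lra. }
  intros Hn.
  assert (E : x * dpsi x / Phi3 x = pev Nl x / pev Klist x).
  { unfold dpsi, Phi3, Klist. rewrite !pev_mul, eXm1, eF1, eG.
    field. repeat split; lra. }
  rewrite E. lra.
Qed.

Definition xF := pmul (pmul (pmul Xl Xm1l) F1l) Gl.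
Definition Zid (Rl b b0 b1 b2 : list Z) (e m0 m1 m2 : Z) :=
  psub (padd (pscal 14112 (pmul xF (psub (pmul (pder b) Nl) (pscal 3 (pmul b (pder Nl))))))
             (pscal 1008 (pmul Xl (pmul Rl (pmul b Nl)))))
       (padd (pscal e (pmul b (pmul Nl Nl)))
             (pscal 24192 (pmul (pmul (pmul Xl Xm1l) (ppow F1l 7))
                 (padd (pscal m0 b0) (padd (pscal m1 b1) (pscal m2 b2)))))).

Lemma pev_Zid Rl b b0 b1 b2 e m0 m1 m2 x :
  pev (Zid Rl b b0 b1 b2 e m0 m1 m2) x =
  14112 * (x * (x - 1) * F1 x * (G0 x * G1 x)) * (pev (pder b) x * pev Nl x - 3 * (pev b x * pev (pder Nl) x))
  + 1008 * (x * (pev Rl x * (pev b x * pev Nl x)))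
  - (IZR e * (pev b x * (pev Nl x * pev Nl x))
     + 24192 * (x * (x - 1) * F1 x ^ 7 * (IZR m0 * pev b0 x + (IZR m1 * pev b1 x + IZR m2 * pev b2 x)))).
Proof.
  unfold Zid, xF. rewrite !pev_psub, !pev_add, !pev_scal, !pev_mul, !pev_psub, !pev_scal, !pev_mul,
    !pev_add, !pev_scal, !pev_pow, eX, eXm1, eF1, eG. simpl IZR. ring.
Qed.

Lemma rel_generic (Rl b b0 b1 b2 : list Z) (e m0 m1 m2 : Z) (h rr : R -> R) (x E M0 M1 M2 : R) :
  allzero (Zid Rl b b0 b1 b2 e m0 m1 m2) = true ->
  E = IZR e / 14112 -> M0 = IZR m0 / 1008 -> M1 = IZR m1 / 1008 -> M2 = IZR m2 / 1008 ->
  rr x = pev Rl x / (14 * ((x - 1) * F1 x * (G0 x * G1 x))) ->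
  x <> 0 -> x - 1 <> 0 -> F1 x <> 0 -> G0 x <> 0 -> G1 x <> 0 -> pev Nl x <> 0 ->
  Phi3 x * (((pev (pder b) x * pev Nl x - 3 * pev b x * pev (pder Nl) x) / (49 * pev Nl x ^ 4)
             + pev b x / (49 * pev Nl x ^ 3) * rr x) * h x) =
  dpsi x * (E * (pev b x / (49 * pev Nl x ^ 3) * h x) + Phi3 x / (1 - Phi3 x) *
     (M0 * (pev b0 x / (49 * pev Nl x ^ 3) * h x) + M1 * (pev b1 x / (49 * pev Nl x ^ 3) * h x)
      + M2 * (pev b2 x / (49 * pev Nl x ^ 3) * h x))).
Proof.
  intros HZ HE H0 H1 H2 Hr Hx Hx1 Hf Hg0 Hg1 Hn.
  pose proof (allzero_pev _ x HZ) as Z. rewrite pev_Zid in Z.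
  assert (Hrho : Phi3 x / (1 - Phi3 x) = 1728 * x * (x - 1) * F1 x ^ 7 / pev Nl x ^ 2).
  { rewrite one_minus_psi by auto. unfold Phi3. field. repeat split; auto. }
  rewrite Hrho, HE, H0, H1, H2, Hr. unfold Phi3, dpsi.
  set (f := F1 x) in *. set (g0 := G0 x) in *. set (g1 := G1 x) in *. set (n := pev Nl x) in *.
  set (n' := pev (pder Nl) x) in *. set (bb := pev b x) in *. set (bb' := pev (pder b) x) in *.
  set (c0 := pev b0 x) in *. set (c1 := pev b1 x) in *. set (c2 := pev b2 x) in *.
  set (r := pev Rl x) in *. set (hh := h x).
  apply Rminus_diag_uniq.
  set (Zx := 14112 * (x * (x - 1) * f * (g0 * g1)) * (bb' * n - 3 * (bb * n')) + 1008 * (x * (r * (bb * n))) -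
       (IZR e * (bb * (n * n)) + 24192 * (x * (x - 1) * f ^ 7 * (IZR m0 * c0 + (IZR m1 * c1 + IZR m2 * c2))))) in Z.
  transitivity (1728 * f ^ 6 * hh / (49 * 14112 * (g0 * g1) ^ 4 * n ^ 4) * Zx).
  - unfold Zx. field. repeat split; auto.
  - rewrite Z. ring.
Qed.

Lemma isd_rpow (u : R -> R) (du a x : R) : 0 < u x -> is_derive u x du ->
  is_derive (fun t => Rpower (u t) a) x (Rpower (u x) a * (a * du / u x)).
Proof.
  intros Hu Hd. unfold Rpower.
  apply (isd_eq _ _ (exp (a * ln (u x)) * (a * (du * / u x)))); [field; lra|].
  apply (isd_comp exp (fun t => a * ln (u t))).
  - apply is_derive_scal. apply (isd_eq _ _ (/ u x * du)); [ring|].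
    apply (isd_comp ln u); auto. apply is_derive_Reals, derivable_pt_lim_ln; auto.
  - apply is_derive_Reals, derivable_pt_lim_exp.
Qed.

Lemma Rpower_base1 a : Rpower 1 a = 1.
Proof. unfold Rpower. rewrite ln_1, Rmult_0_r, exp_0. auto. Qed.

Lemma pev_head (a : Z) l : pev (a :: l) 0 = IZR a.
Proof. simpl; ring. Qed.

Definition hgen (al be : R) (m : nat) (x : R) : R :=
  Rpower (1 - x) al * / F1 x ^ m * Rpower (G0 x) be * Rpower (G1 x) be.

Definition Rid (Rl : list Z) (A B C : Z) :=
  psub Rl (padd (pscal A (pmul F1l Gl)) (padd (pscal C (pmul Xm1l (pmul Gl (pder F1l))))
     (pscal B (pmul Xm1l (pmul F1l (padd (pmul (pder G0l) G1l) (pmul G0l (pder G1l)))))))).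

Lemma hgen_derive (Rl : list Z) (A B C : Z) al be m x :
  allzero (Rid Rl A B C) = true -> IZR A = 14 * al -> IZR B = 14 * be -> IZR C = - 14 * INR m ->
  0 < 1 - x -> F1 x <> 0 -> 0 < G0 x -> 0 < G1 x ->
  is_derive (hgen al be m) x (hgen al be m x * (pev Rl x / (14 * ((x - 1) * F1 x * (G0 x * G1 x))))).
Proof.
  intros HZ HA HB HC P1 P2 P3 P4.
  pose proof (allzero_pev _ x HZ) as Z. unfold Rid in Z.
  rewrite pev_psub, !pev_add, !pev_scal, !pev_mul, !pev_add, !pev_mul, eXm1, eF1, eG, eG0, eG1 in Z.
  unfold hgen.
  assert (D1 : is_derive (fun t => 1 - t) x (-1)).
  { apply (isd_eq _ _ (0 - 1)); [ring|]. apply isd_minus; [apply isd_const|apply isd_id]. }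
  assert (DF : is_derive F1 x (pev (pder F1l) x)).
  { apply (isd_ext (pev F1l)); [apply eF1| apply pder_correct]. }
  assert (DG0 : is_derive G0 x (pev (pder G0l) x)).
  { apply (isd_ext (pev G0l)); [apply eG0| apply pder_correct]. }
  assert (DG1 : is_derive G1 x (pev (pder G1l) x)).
  { apply (isd_ext (pev G1l)); [apply eG1| apply pder_correct]. }
  pose proof (isd_rpow _ _ al x P1 D1) as R1.
  assert (R2 : is_derive (fun t => / F1 t ^ m) x (- (INR m * pev (pder F1l) x * F1 x ^ pred m) / (F1 x ^ m) ^ 2)).
  { apply (isd_ext (fun t => 1 / F1 t ^ m)); [intros; unfold Rdiv; ring|].
    apply (isd_eq _ _ ((0 * F1 x ^ m - 1 * (INR m * pev (pder F1l) x * F1 x ^ pred m)) / (F1 x ^ m) ^ 2)); [field; apply pow_nonzero; auto|].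
    apply isd_div; [apply isd_const| apply is_derive_pow; auto| apply pow_nonzero; auto]. }
  pose proof (isd_rpow _ _ be x P3 DG0) as R3.
  pose proof (isd_rpow _ _ be x P4 DG1) as R4.
  pose proof (isd_mult _ _ _ _ _ R1 R2) as M12.
  pose proof (isd_mult _ _ _ _ _ M12 R3) as M123.
  pose proof (isd_mult _ _ _ _ _ M123 R4) as M.
  eapply isd_eq; [|exact M]. cbv beta.
  set (p1 := Rpower (1 - x) al). set (p3 := Rpower (G0 x) be).
  set (p4 := Rpower (G1 x) be).
  replace (pev Rl x) with (IZR A * (F1 x * (G0 x * G1 x)) + (IZR C * ((x - 1) * (G0 x * G1 x * pev (pder F1l) x))
     + IZR B * ((x - 1) * (F1 x * (pev (pder G0l) x * G1 x + G0 x * pev (pder G1l) x))))) by lra.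
  rewrite HA, HB, HC.
  destruct m as [|m]; simpl pred.
  - simpl INR. field. repeat split; lra.
  - rewrite S_INR. simpl pow. field. repeat split; try lra; apply pow_nonzero; auto.
Qed.

Lemma rho_small x : Rabs (Phi3 x) < 1/1000 -> Rabs (Phi3 x / (1 - Phi3 x)) <= 1/999.
Proof.
  intros H. apply Rabs_def2 in H. destruct H.
  rewrite Rabs_div by lra. rewrite (Rabs_right (1 - Phi3 x)) by lra.
  apply Rmult_le_reg_r with (1 - Phi3 x); [lra|].
  unfold Rdiv. rewrite Rmult_assoc, Rinv_l, Rmult_1_r by lra.
  unfold Rabs; destruct Rcase_abs; lra.
Qed.

Definition bA0 : list Z := [(-3); (-4941); (-1545912); (-179205696); (26217144582); (-1003477698366); (18939161885880); (-205837489837080); (1471427514326646); (-7511778002524062); (28813741516397268); (-85759767813341652); (202340981840281446); (-384456066985284774); (596643145013439228); (-768649116495718404); (839968929893648577); (-800770815580671681); (685968773270827608); (-538018975365078096); (385266798204051390); (-246367767450326862); (136529231842413036); (-63661991778439476); (24333449028526212); (-7468592907100980); (1814010168509856); (-332754629249568); (30668154641376); (7281894993048); (-3268970872428); (306085250052); (26211404019); (1112798661); (-3619932); (-18972)]%Z.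
Definition bA1 : list Z := [(0); (-702); (308178); (7089084); (487192698); (-403388688); (-33747890724); (87118599954); (382172122470); (-3223291836108); (15587804803974); (-32805064334394); (-153726701297322); (1390397327788920); (-4947338000390574); (10176869534223876); (-11512985400481956); (562808843533758); (24689033547695022); (-53141863940148894); (67587322637200104); (-60265487344306008); (39093109820262906); (-18205516238272092); (5642322144845772); (-830471177389284); (-163457846697444); (131388129737934); (-38708397116154); (7185739114344); (-971054822922); (100103891994); (-7063617138); (255421434); (-1826112); (-15900); (-6)]%Z.
Definition bA2 : list Z := [(0); (-468); (544932); (59133384); (-3419405228); (95517132820); (-1082137542628); (5051726771470); (2947687450570); (-186671804460128); (1318418063931182); (-5609267186454598); (16952894151812074); (-38685540158581796); (69100328154266950); (-99866974155642892); (121941995626475592); (-133369223914314504); (137800336181266180); (-135146502672452342); (119468780604163666); (-88905568224382884); (52542466138739966); (-23327302997301004); (7095219370141736); (-1037494459764116); (-251281379924720); (223099340247258); (-80041502613194); (17186491849384); (-1911096047590); (44675395710); (722172342); (598854776); (-1440818); (-21080)]%Z.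
Definition RA : list Z := [(-234); (1926); (7272); (-58462); (152966); (-217490); (169428); (-53142); (-11630); (10454); (-1084); (-6)]%Z.
Definition hA (x : R) : R := Rpower (1 - x) (1/7) * Rpower (G0 x) (-1/14) * Rpower (G1 x) (-1/14).
Definition rrA (x : R) : R := pev RA x / (14 * ((x - 1) * F1 x * (G0 x * G1 x))).
Definition HA (b : list Z) (x : R) : R := pev b x / (49 * pev Nl x ^ 3) * hA x.
Definition dHA (b : list Z) (x : R) : R :=
  ((pev (pder b) x * pev Nl x - 3 * pev b x * pev (pder Nl) x) / (49 * pev Nl x ^ 4)
   + pev b x / (49 * pev Nl x ^ 3) * rrA x) * hA x.

Lemma reflR_A : allzero (Rid RA (2) (-1) (0)) = true. Proof. vm_compute. reflexivity. Qed.
Lemma refl_A0 : allzero (Zid RA bA0 bA0 bA1 bA2 (0) (-78) (2635) (-1045)) = true. Proof. vm_compute. reflexivity. Qed.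
Lemma refl_A1 : allzero (Zid RA bA1 bA0 bA1 bA2 (6048) (-78) (2635) (-1045)) = true. Proof. vm_compute. reflexivity. Qed.
Lemma refl_A2 : allzero (Zid RA bA2 bA0 bA1 bA2 (2016) (-78) (2635) (-1045)) = true. Proof. vm_compute. reflexivity. Qed.
Lemma refl_lag_A : allzero (psub (padd (pscal (2) bA0) (padd (pscal (1) bA1) (pscal (-3) bA2))) (pscal 6 (ppow Nl 3))) = true.
Proof. vm_compute. reflexivity. Qed.

Lemma hA_gen x : hA x = hgen (1/7) (-1/14) 0 x.
Proof. unfold hA, hgen. simpl pow. rewrite ?Rinv_1, ?Rmult_1_r. try ring. Qed.

Lemma hA_derive x : 0 < 1 - x -> F1 x <> 0 -> 0 < G0 x -> 0 < G1 x -> is_derive hA x (hA x * rrA x).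
Proof.
  intros P1 P2 P3 P4. apply (isd_ext (hgen (1/7) (-1/14) 0)); [intros; symmetry; apply hA_gen|].
  rewrite hA_gen. unfold rrA.
  apply (hgen_derive RA (2) (-1) (0)); auto; try apply reflR_A; simpl INR; simpl IZR; lra.
Qed.

Lemma HA_derive b x : 0 < 1 - x -> F1 x <> 0 -> 0 < G0 x -> 0 < G1 x -> pev Nl x <> 0 ->
  is_derive (HA b) x (dHA b x).
Proof.
  intros P1 P2 P3 P4 P5. unfold HA, dHA.
  assert (D1 : is_derive (fun t => 49 * pev Nl t ^ 3) x (49 * (INR 3 * pev (pder Nl) x * pev Nl x ^ pred 3)))
    by (apply is_derive_scal, is_derive_pow, pder_correct).
  assert (NZ : 49 * pev Nl x ^ 3 <> 0) by (apply Rmult_integral_contrapositive; split; [lra| apply pow_nonzero; auto]).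
  pose proof (isd_div _ _ _ _ _ (pder_correct b x) D1 NZ) as D2.
  pose proof (isd_mult _ _ _ _ _ D2 (hA_derive x P1 P2 P3 P4)) as D3.
  eapply isd_eq; [|exact D3]. simpl INR; simpl pred. cbv beta. field. auto.
Qed.

Lemma U_bound_A : forall n : nat, Rabs ((INR n + (-1/42)) * (INR n + 13/42) * (INR n + 9/14)) <=
             (INR n + 1) * (INR n + 4/7) * (INR n + 6/7).
Proof.
  intros n. pose proof (pos_INR n) as P. set (t := INR n) in *.
  apply Rabs_le. assert (0 <= t * t) by nra. assert (0 <= t * t * t) by nra. split; nra.
Qed.

Lemma caseA : exists delta, 0 < delta /\ forall x, Rabs x < delta ->
  hyp32_sum (-1/42) (13/42) (9/14) (4/7) (6/7) (Phi3 x) (hA x).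
Proof.
  destruct local_facts as [d [Hd L]].
  assert (M0 : muk (-1/42) (13/42) (9/14) (1 - 4/7) (1 - 6/7) 0 = IZR (-78) / 1008) by (unfold muk, Uf; simpl IZR; field).
  assert (M1 : muk (-1/42) (13/42) (9/14) (1 - 4/7) (1 - 6/7) 1 = IZR (2635) / 1008) by (unfold muk, Uf; simpl IZR; field).
  assert (M2 : muk (-1/42) (13/42) (9/14) (1 - 4/7) (1 - 6/7) 2 = IZR (-1045) / 1008) by (unfold muk, Uf; simpl IZR; field).
  apply (generic (-1/42) (13/42) (9/14) (4/7) (6/7) Phi3 dpsi hA (HA bA0) (HA bA1) (HA bA2) (dHA bA0) (dHA bA1) (dHA bA2) d 1);
    try lra; try apply U_bound_A.
  - unfold Phi3; field_simplify; [lra| unfold G0, G1; lra].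
  - intros x Hx. destruct (L x Hx) as [Q0 [Q1 [Q2 [Q3 [Q4 [Q5 [Q6 Q7]]]]]]].
    assert (NZ : pev Nl x <> 0) by lra.
    split; [apply psi_derive; lra|]. split; [apply Rabs_def1; apply Rabs_def2 in Q5; lra|].
    split; [apply HA_derive; lra|]. split; [apply HA_derive; lra|]. split; [apply HA_derive; lra|].
    pose proof (allzero_pev _ x refl_lag_A) as Lg.
    rewrite !pev_psub, !pev_add, !pev_scal, pev_pow in Lg.
    unfold HA. simpl IZR in Lg.
    transitivity (hA x * ((2) * pev bA0 x + (1) * pev bA1 x + (-3) * pev bA2 x) / (6 * pev Nl x ^ 3)).
    + replace ((2) * pev bA0 x + (1) * pev bA1 x + (-3) * pev bA2 x) with (6 * pev Nl x ^ 3) by lra.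
      field. auto.
    + field. auto.
  - unfold HA, hA. assert (E0 : G0 0 = 1) by (unfold G0; ring). assert (E1 : G1 0 = 1) by (unfold G1; ring).
    assert (E2 : F1 0 = 1) by (unfold F1; ring). assert (E3 : pev Nl 0 = -1) by (simpl; ring).
    rewrite ?E0, ?E1, ?E2, E3, Rminus_0_r, ?Rpower_base1. unfold bA0. rewrite pev_head. simpl IZR. field.
  - unfold HA. unfold bA1. rewrite pev_head. simpl IZR. unfold Rdiv. ring.
  - unfold HA. unfold bA2. rewrite pev_head. simpl IZR. unfold Rdiv. ring.
  - intros x Hx. assert (Hx' : Rabs x < d) by lra. destruct (L x Hx') as [Q0 [Q1 [Q2 [Q3 [Q4 [Q5 [Q6 Q7]]]]]]].
    assert (Hn0 : x <> 0) by (intro; subst; rewrite Rabs_R0 in Hx; lra).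
    assert (Pn : Phi3 x <> 0).
    { rewrite ePsi_q. apply Rmult_integral_contrapositive; split; auto.
      intro E; rewrite E, Rabs_R0 in Q6; lra. }
    split; [auto|]. split; [apply Q7; auto|].
    split.
    { rewrite M0, M1, M2. apply Rle_trans with (1/999 * (3 * 4)); [|lra].
      apply Rmult_le_compat; [apply Rabs_pos| |apply rho_small; auto|].
      - pose proof (Rabs_pos (IZR (-78) / 1008)); pose proof (Rabs_pos (IZR (2635) / 1008)); pose proof (Rabs_pos (IZR (-1045) / 1008)); lra.
      - apply Rmult_le_compat_l; [lra|]. simpl IZR. unfold Rabs; repeat destruct Rcase_abs; lra. }
    split.
    { rewrite ePsi_q, Rabs_mult. rewrite Rmult_1_l. pose proof (Rabs_pos x). nra. }
    rewrite M0, M1, M2.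
    split; [|split].
    + apply (rel_generic RA bA0 bA0 bA1 bA2 (0) (-78) (2635) (-1045) hA rrA); auto;
        try apply refl_A0; try (simpl IZR; field); lra.
    + apply (rel_generic RA bA1 bA0 bA1 bA2 (6048) (-78) (2635) (-1045) hA rrA); auto;
        try apply refl_A1; try (simpl IZR; field); lra.
    + apply (rel_generic RA bA2 bA0 bA1 bA2 (2016) (-78) (2635) (-1045) hA rrA); auto;
        try apply refl_A2; try (simpl IZR; field); lra.
Qed.

Definition bB0 : list Z := [(2); (6822); (-771010); (-71131388); (3208079598); (-77620636056); (766302177710); (-3028730160132); (-6554129772728); (143139078822414); (-881637642941340); (3450591540682208); (-9827845493318842); (21374648041264278); (-36304492739293402); (49023625259931552); (-54205469814909780); (52154658759670402); (-48126717973842836); (45642875329227228); (-42682192030070682); (35543838775223014); (-24389876287152234); (13217933092830640); (-5527450537982446); (1755368854554852); (-411209133621250); (61338718716992); (-130152216768); (-2613426356042); (530620163464); (-20554960884); (-1165359764); (-77382612); (528552); (468)]%Z.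
Definition bB1 : list Z := [(0); (5016); (-994422); (11983686); (-936850590); (1968354852); (78095632950); (-422770351944); (-1173401272728); (15513773577690); (-43951642597224); (-36979554875880); (728258186598366); (-3161114512525566); (8868443476909458); (-18358708035358608); (28864473229597674); (-34128965265722196); (28792060442753952); (-14185384895266050); (-1565575105851426); (10416849659728770); (-10760966175455886); (6715340068521888); (-2826634165504782); (789750310981308); (-124728960193914); (-740534261184); (6026740375812); (-1678280156922); (248136851724); (-20737194432); (889425738); (-17149446); (283608); (702)]%Z.
Definition bB2 : list Z := [(0); (3135); (-2868525); (-377050155); (36870393465); (-1264370223450); (21655899704550); (-217703230758534); (1457952575189298); (-7026430210307148); (25543427679789084); (-72167892477365700); (161728879928637228); (-292090028765358420); (431628022934448684); (-531045428587565496); (555559002416530704); (-505139104515066345); (405026678590634619); (-286313147885000163); (176616788124225633); (-95034825452935404); (46057756201434132); (-21304565796639000); (9633922321515216); (-4089408679807824); (1554754094713296); (-509331229545408); (128167611490032); (-17985972679458); (-215992393170); (268660258374); (19403584422); (234728019); (-1720737); (5049); (-3)]%Z.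
Definition RB : list Z := [(1254); (-29678); (156602); (-399486); (536162); (-382942); (162162); (-86950); (62238); (-18558); (-810); (2)]%Z.
Definition hB (x : R) : R := Rpower (1 - x) (2/7) * / F1 x * Rpower (G0 x) (5/14) * Rpower (G1 x) (5/14).
Definition rrB (x : R) : R := pev RB x / (14 * ((x - 1) * F1 x * (G0 x * G1 x))).
Definition HB (b : list Z) (x : R) : R := pev b x / (49 * pev Nl x ^ 3) * hB x.
Definition dHB (b : list Z) (x : R) : R :=
  ((pev (pder b) x * pev Nl x - 3 * pev b x * pev (pder Nl) x) / (49 * pev Nl x ^ 4)
   + pev b x / (49 * pev Nl x ^ 3) * rrB x) * hB x.

Lemma reflR_B : allzero (Rid RB (4) (5) (-14)) = true. Proof. vm_compute. reflexivity. Qed.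
Lemma refl_B0 : allzero (Zid RB bB0 bB0 bB1 bB2 (0) (-1045) (2635) (-78)) = true. Proof. vm_compute. reflexivity. Qed.
Lemma refl_B1 : allzero (Zid RB bB1 bB0 bB1 bB2 (4032) (-1045) (2635) (-78)) = true. Proof. vm_compute. reflexivity. Qed.
Lemma refl_B2 : allzero (Zid RB bB2 bB0 bB1 bB2 (-2016) (-1045) (2635) (-78)) = true. Proof. vm_compute. reflexivity. Qed.
Lemma refl_lag_B : allzero (psub (padd (pscal (-3) bB0) (padd (pscal (1) bB1) (pscal (2) bB2))) (pscal 6 (ppow Nl 3))) = true.
Proof. vm_compute. reflexivity. Qed.

Lemma hB_gen x : hB x = hgen (2/7) (5/14) 1 x.
Proof. unfold hB, hgen. simpl pow. rewrite ?Rinv_1, ?Rmult_1_r. try ring. Qed.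

Lemma hB_derive x : 0 < 1 - x -> F1 x <> 0 -> 0 < G0 x -> 0 < G1 x -> is_derive hB x (hB x * rrB x).
Proof.
  intros P1 P2 P3 P4. apply (isd_ext (hgen (2/7) (5/14) 1)); [intros; symmetry; apply hB_gen|].
  rewrite hB_gen. unfold rrB.
  apply (hgen_derive RB (4) (5) (-14)); auto; try apply reflR_B; simpl INR; simpl IZR; lra.
Qed.

Lemma HB_derive b x : 0 < 1 - x -> F1 x <> 0 -> 0 < G0 x -> 0 < G1 x -> pev Nl x <> 0 ->
  is_derive (HB b) x (dHB b x).
Proof.
  intros P1 P2 P3 P4 P5. unfold HB, dHB.
  assert (D1 : is_derive (fun t => 49 * pev Nl t ^ 3) x (49 * (INR 3 * pev (pder Nl) x * pev Nl x ^ pred 3)))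
    by (apply is_derive_scal, is_derive_pow, pder_correct).
  assert (NZ : 49 * pev Nl x ^ 3 <> 0) by (apply Rmult_integral_contrapositive; split; [lra| apply pow_nonzero; auto]).
  pose proof (isd_div _ _ _ _ _ (pder_correct b x) D1 NZ) as D2.
  pose proof (isd_mult _ _ _ _ _ D2 (hB_derive x P1 P2 P3 P4)) as D3.
  eapply isd_eq; [|exact D3]. simpl INR; simpl pred. cbv beta. field. auto.
Qed.

Lemma U_bound_B : forall n : nat, Rabs ((INR n + (5/42)) * (INR n + 19/42) * (INR n + 11/14)) <=
             (INR n + 1) * (INR n + 5/7) * (INR n + 8/7).
Proof.
  intros n. pose proof (pos_INR n) as P. set (t := INR n) in *.
  apply Rabs_le. assert (0 <= t * t) by nra. assert (0 <= t * t * t) by nra. split; nra.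
Qed.

Lemma caseB : exists delta, 0 < delta /\ forall x, Rabs x < delta ->
  hyp32_sum (5/42) (19/42) (11/14) (5/7) (8/7) (Phi3 x) (hB x).
Proof.
  destruct local_facts as [d [Hd L]].
  assert (M0 : muk (5/42) (19/42) (11/14) (1 - 5/7) (1 - 8/7) 0 = IZR (-1045) / 1008) by (unfold muk, Uf; simpl IZR; field).
  assert (M1 : muk (5/42) (19/42) (11/14) (1 - 5/7) (1 - 8/7) 1 = IZR (2635) / 1008) by (unfold muk, Uf; simpl IZR; field).
  assert (M2 : muk (5/42) (19/42) (11/14) (1 - 5/7) (1 - 8/7) 2 = IZR (-78) / 1008) by (unfold muk, Uf; simpl IZR; field).
  apply (generic (5/42) (19/42) (11/14) (5/7) (8/7) Phi3 dpsi hB (HB bB0) (HB bB1) (HB bB2) (dHB bB0) (dHB bB1) (dHB bB2) d 1);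
    try lra; try apply U_bound_B.
  - unfold Phi3; field_simplify; [lra| unfold G0, G1; lra].
  - intros x Hx. destruct (L x Hx) as [Q0 [Q1 [Q2 [Q3 [Q4 [Q5 [Q6 Q7]]]]]]].
    assert (NZ : pev Nl x <> 0) by lra.
    split; [apply psi_derive; lra|]. split; [apply Rabs_def1; apply Rabs_def2 in Q5; lra|].
    split; [apply HB_derive; lra|]. split; [apply HB_derive; lra|]. split; [apply HB_derive; lra|].
    pose proof (allzero_pev _ x refl_lag_B) as Lg.
    rewrite !pev_psub, !pev_add, !pev_scal, pev_pow in Lg.
    unfold HB. simpl IZR in Lg.
    transitivity (hB x * ((-3) * pev bB0 x + (1) * pev bB1 x + (2) * pev bB2 x) / (6 * pev Nl x ^ 3)).
    + replace ((-3) * pev bB0 x + (1) * pev bB1 x + (2) * pev bB2 x) with (6 * pev Nl x ^ 3) by lra.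
      field. auto.
    + field. auto.
  - unfold HB, hB. assert (E0 : G0 0 = 1) by (unfold G0; ring). assert (E1 : G1 0 = 1) by (unfold G1; ring).
    assert (E2 : F1 0 = 1) by (unfold F1; ring). assert (E3 : pev Nl 0 = -1) by (simpl; ring).
    rewrite ?E0, ?E1, ?E2, E3, Rminus_0_r, ?Rpower_base1. unfold bB0. rewrite pev_head. simpl IZR. field.
  - unfold HB. unfold bB1. rewrite pev_head. simpl IZR. unfold Rdiv. ring.
  - unfold HB. unfold bB2. rewrite pev_head. simpl IZR. unfold Rdiv. ring.
  - intros x Hx. assert (Hx' : Rabs x < d) by lra. destruct (L x Hx') as [Q0 [Q1 [Q2 [Q3 [Q4 [Q5 [Q6 Q7]]]]]]].
    assert (Hn0 : x <> 0) by (intro; subst; rewrite Rabs_R0 in Hx; lra).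
    assert (Pn : Phi3 x <> 0).
    { rewrite ePsi_q. apply Rmult_integral_contrapositive; split; auto.
      intro E; rewrite E, Rabs_R0 in Q6; lra. }
    split; [auto|]. split; [apply Q7; auto|].
    split.
    { rewrite M0, M1, M2. apply Rle_trans with (1/999 * (3 * 4)); [|lra].
      apply Rmult_le_compat; [apply Rabs_pos| |apply rho_small; auto|].
      - pose proof (Rabs_pos (IZR (-1045) / 1008)); pose proof (Rabs_pos (IZR (2635) / 1008)); pose proof (Rabs_pos (IZR (-78) / 1008)); lra.
      - apply Rmult_le_compat_l; [lra|]. simpl IZR. unfold Rabs; repeat destruct Rcase_abs; lra. }
    split.
    { rewrite ePsi_q, Rabs_mult. rewrite Rmult_1_l. pose proof (Rabs_pos x). nra. }
    rewrite M0, M1, M2.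
    split; [|split].
    + apply (rel_generic RB bB0 bB0 bB1 bB2 (0) (-1045) (2635) (-78) hB rrB); auto;
        try apply refl_B0; try (simpl IZR; field); lra.
    + apply (rel_generic RB bB1 bB0 bB1 bB2 (4032) (-1045) (2635) (-78) hB rrB); auto;
        try apply refl_B1; try (simpl IZR; field); lra.
    + apply (rel_generic RB bB2 bB0 bB1 bB2 (-2016) (-1045) (2635) (-78) hB rrB); auto;
        try apply refl_B2; try (simpl IZR; field); lra.
Qed.

Definition bC0 : list Z := [(-6); (16116); (-2386392); (-183830286); (236422422); (2831579430); (-67670033316); (515276672058); (1286166155838); (-22504547737128); (61833079573014); (107417270797644); (-1194822330089988); (4152309117609414); (-9501557737336578); (17412012312281814); (-28353213153446928); (41876983507773126); (-53876687394369360); (57457920267681372); (-49019692865404596); (32573428513417686); (-16346601229060794); (5864307622009182); (-1307243300621634); (79469049374994); (45755269439688); (-9398300142198); (-2763045135186); (1589584970016); (-304669229022); (27371461308); (-1066429974); (18842142); (-818862); (-5016)]%Z.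
Definition bC1 : list Z := [(0); (21080); (-2178618); (-537324364); (19538112452); (-374254628670); (3025727740780); (-8279649210866); (-46124516204274); (593232287836648); (-3281477030857850); (12065666211980748); (-32600308321507064); (67700600284194170); (-111466412816714910); (150050340617499030); (-171278842325946290); (172499938644206718); (-157621977794938198); (130442361403684006); (-94831017880664694); (58152358455748826); (-29009151725022150); (11436472630024830); (-3482391134188202); (813663263804950); (-159669345870156); (37927071926098); (-12461112179634); (3335330451432); (-470360737018); (16775231720); (472974984); (93272358); (-530980); (-6894); (2)]%Z.
Definition bC2 : list Z := [(0); (18972); (-4283952); (-978432633); (60778806240); (-1709752824660); (25117920882288); (-226048632846636); (1397367211827696); (-6332281236128388); (21890776236829200); (-59317478883254652); (128531725944699072); (-226257812216031072); (328070143425439440); (-397390715725034490); (408557786841498240); (-362624159075009532); (282118162777553232); (-194935571354788707); (122120608228111200); (-72200335358991144); (41921660571431712); (-23551240267591362); (11941815994765008); (-5146826435129520); (1846821661523136); (-540119816791242); (114066064301232); (-10696770031716); (-1441060703520); (300601219410); (22839014400); (472714680); (-2758800); (-3135)]%Z.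
Definition RC : list Z := [(4216); (-89652); (448570); (-1177560); (1680120); (-1326836); (695842); (-402660); (223008); (-51704); (-3342); (4)]%Z.
Definition hC (x : R) : R := Rpower (1 - x) (-3/7) * / (F1 x ^ 3) * Rpower (G0 x) (17/14) * Rpower (G1 x) (17/14).
Definition rrC (x : R) : R := pev RC x / (14 * ((x - 1) * F1 x * (G0 x * G1 x))).
Definition HC (b : list Z) (x : R) : R := pev b x / (49 * pev Nl x ^ 3) * hC x.
Definition dHC (b : list Z) (x : R) : R :=
  ((pev (pder b) x * pev Nl x - 3 * pev b x * pev (pder Nl) x) / (49 * pev Nl x ^ 4)
   + pev b x / (49 * pev Nl x ^ 3) * rrC x) * hC x.

Lemma reflR_C : allzero (Rid RC (-6) (17) (-42)) = true. Proof. vm_compute. reflexivity. Qed.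
Lemma refl_C0 : allzero (Zid RC bC0 bC0 bC1 bC2 (0) (2635) (-1045) (-78)) = true. Proof. vm_compute. reflexivity. Qed.
Lemma refl_C1 : allzero (Zid RC bC1 bC0 bC1 bC2 (-4032) (2635) (-1045) (-78)) = true. Proof. vm_compute. reflexivity. Qed.
Lemma refl_C2 : allzero (Zid RC bC2 bC0 bC1 bC2 (-6048) (2635) (-1045) (-78)) = true. Proof. vm_compute. reflexivity. Qed.
Lemma refl_lag_C : allzero (psub (padd (pscal (1) bC0) (padd (pscal (-3) bC1) (pscal (2) bC2))) (pscal 6 (ppow Nl 3))) = true.
Proof. vm_compute. reflexivity. Qed.

Lemma hC_gen x : hC x = hgen (-3/7) (17/14) 3 x.
Proof. unfold hC, hgen. simpl pow. rewrite ?Rinv_1, ?Rmult_1_r. try ring. Qed.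

Lemma hC_derive x : 0 < 1 - x -> F1 x <> 0 -> 0 < G0 x -> 0 < G1 x -> is_derive hC x (hC x * rrC x).
Proof.
  intros P1 P2 P3 P4. apply (isd_ext (hgen (-3/7) (17/14) 3)); [intros; symmetry; apply hC_gen|].
  rewrite hC_gen. unfold rrC.
  apply (hgen_derive RC (-6) (17) (-42)); auto; try apply reflR_C; simpl INR; simpl IZR; lra.
Qed.

Lemma HC_derive b x : 0 < 1 - x -> F1 x <> 0 -> 0 < G0 x -> 0 < G1 x -> pev Nl x <> 0 ->
  is_derive (HC b) x (dHC b x).
Proof.
  intros P1 P2 P3 P4 P5. unfold HC, dHC.
  assert (D1 : is_derive (fun t => 49 * pev Nl t ^ 3) x (49 * (INR 3 * pev (pder Nl) x * pev Nl x ^ pred 3)))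
    by (apply is_derive_scal, is_derive_pow, pder_correct).
  assert (NZ : 49 * pev Nl x ^ 3 <> 0) by (apply Rmult_integral_contrapositive; split; [lra| apply pow_nonzero; auto]).
  pose proof (isd_div _ _ _ _ _ (pder_correct b x) D1 NZ) as D2.
  pose proof (isd_mult _ _ _ _ _ D2 (hC_derive x P1 P2 P3 P4)) as D3.
  eapply isd_eq; [|exact D3]. simpl INR; simpl pred. cbv beta. field. auto.
Qed.

Lemma U_bound_C : forall n : nat, Rabs ((INR n + (17/42)) * (INR n + 31/42) * (INR n + 15/14)) <=
             (INR n + 1) * (INR n + 9/7) * (INR n + 10/7).
Proof.
  intros n. pose proof (pos_INR n) as P. set (t := INR n) in *.
  apply Rabs_le. assert (0 <= t * t) by nra. assert (0 <= t * t * t) by nra. split; nra.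
Qed.

Lemma caseC : exists delta, 0 < delta /\ forall x, Rabs x < delta ->
  hyp32_sum (17/42) (31/42) (15/14) (9/7) (10/7) (Phi3 x) (hC x).
Proof.
  destruct local_facts as [d [Hd L]].
  assert (M0 : muk (17/42) (31/42) (15/14) (1 - 9/7) (1 - 10/7) 0 = IZR (2635) / 1008) by (unfold muk, Uf; simpl IZR; field).
  assert (M1 : muk (17/42) (31/42) (15/14) (1 - 9/7) (1 - 10/7) 1 = IZR (-1045) / 1008) by (unfold muk, Uf; simpl IZR; field).
  assert (M2 : muk (17/42) (31/42) (15/14) (1 - 9/7) (1 - 10/7) 2 = IZR (-78) / 1008) by (unfold muk, Uf; simpl IZR; field).
  apply (generic (17/42) (31/42) (15/14) (9/7) (10/7) Phi3 dpsi hC (HC bC0) (HC bC1) (HC bC2) (dHC bC0) (dHC bC1) (dHC bC2) d 1);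
    try lra; try apply U_bound_C.
  - unfold Phi3; field_simplify; [lra| unfold G0, G1; lra].
  - intros x Hx. destruct (L x Hx) as [Q0 [Q1 [Q2 [Q3 [Q4 [Q5 [Q6 Q7]]]]]]].
    assert (NZ : pev Nl x <> 0) by lra.
    split; [apply psi_derive; lra|]. split; [apply Rabs_def1; apply Rabs_def2 in Q5; lra|].
    split; [apply HC_derive; lra|]. split; [apply HC_derive; lra|]. split; [apply HC_derive; lra|].
    pose proof (allzero_pev _ x refl_lag_C) as Lg.
    rewrite !pev_psub, !pev_add, !pev_scal, pev_pow in Lg.
    unfold HC. simpl IZR in Lg.
    transitivity (hC x * ((1) * pev bC0 x + (-3) * pev bC1 x + (2) * pev bC2 x) / (6 * pev Nl x ^ 3)).
    + replace ((1) * pev bC0 x + (-3) * pev bC1 x + (2) * pev bC2 x) with (6 * pev Nl x ^ 3) by lra.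
      field. auto.
    + field. auto.
  - unfold HC, hC. assert (E0 : G0 0 = 1) by (unfold G0; ring). assert (E1 : G1 0 = 1) by (unfold G1; ring).
    assert (E2 : F1 0 = 1) by (unfold F1; ring). assert (E3 : pev Nl 0 = -1) by (simpl; ring).
    rewrite ?E0, ?E1, ?E2, E3, Rminus_0_r, ?Rpower_base1. unfold bC0. rewrite pev_head. simpl IZR. field.
  - unfold HC. unfold bC1. rewrite pev_head. simpl IZR. unfold Rdiv. ring.
  - unfold HC. unfold bC2. rewrite pev_head. simpl IZR. unfold Rdiv. ring.
  - intros x Hx. assert (Hx' : Rabs x < d) by lra. destruct (L x Hx') as [Q0 [Q1 [Q2 [Q3 [Q4 [Q5 [Q6 Q7]]]]]]].
    assert (Hn0 : x <> 0) by (intro; subst; rewrite Rabs_R0 in Hx; lra).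
    assert (Pn : Phi3 x <> 0).
    { rewrite ePsi_q. apply Rmult_integral_contrapositive; split; auto.
      intro E; rewrite E, Rabs_R0 in Q6; lra. }
    split; [auto|]. split; [apply Q7; auto|].
    split.
    { rewrite M0, M1, M2. apply Rle_trans with (1/999 * (3 * 4)); [|lra].
      apply Rmult_le_compat; [apply Rabs_pos| |apply rho_small; auto|].
      - pose proof (Rabs_pos (IZR (2635) / 1008)); pose proof (Rabs_pos (IZR (-1045) / 1008)); pose proof (Rabs_pos (IZR (-78) / 1008)); lra.
      - apply Rmult_le_compat_l; [lra|]. simpl IZR. unfold Rabs; repeat destruct Rcase_abs; lra. }
    split.
    { rewrite ePsi_q, Rabs_mult. rewrite Rmult_1_l. pose proof (Rabs_pos x). nra. }
    rewrite M0, M1, M2.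
    split; [|split].
    + apply (rel_generic RC bC0 bC0 bC1 bC2 (0) (2635) (-1045) (-78) hC rrC); auto;
        try apply refl_C0; try (simpl IZR; field); lra.
    + apply (rel_generic RC bC1 bC0 bC1 bC2 (-4032) (2635) (-1045) (-78) hC rrC); auto;
        try apply refl_C1; try (simpl IZR; field); lra.
    + apply (rel_generic RC bC2 bC0 bC1 bC2 (-6048) (2635) (-1045) (-78) hC rrC); auto;
        try apply refl_C2; try (simpl IZR; field); lra.
Qed.

Theorem mainTheorem6 :
  exists delta : R, 0 < delta /\
  forall x : R, Rabs x < delta ->
    hyp32_sum (-1/42) (13/42) (9/14) (4/7) (6/7) (Phi3 x)
      (Rpower (1 - x) (1/7) * Rpower (G0 x) (-1/14) * Rpower (G1 x) (-1/14)) /\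
    hyp32_sum (5/42) (19/42) (11/14) (5/7) (8/7) (Phi3 x)
      (Rpower (1 - x) (2/7) * / F1 x * Rpower (G0 x) (5/14) * Rpower (G1 x) (5/14)) /\
    hyp32_sum (17/42) (31/42) (15/14) (9/7) (10/7) (Phi3 x)
      (Rpower (1 - x) (-3/7) * / (F1 x ^ 3) * Rpower (G0 x) (17/14) * Rpower (G1 x) (17/14)).
Proof.
  destruct caseA as [dA [HdA A]]. destruct caseB as [dB [HdB B]]. destruct caseC as [dC [HdC C]].
  exists (Rmin dA (Rmin dB dC)). split; [repeat apply Rmin_glb_lt; auto|].
  intros x Hx.
  pose proof (Rmin_l dA (Rmin dB dC)). pose proof (Rmin_r dA (Rmin dB dC)).
  pose proof (Rmin_l dB dC). pose proof (Rmin_r dB dC).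
  split; [|split].
  - exact (A x ltac:(lra)).
  - exact (B x ltac:(lra)).
  - exact (C x ltac:(lra)).
Qed.
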